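(* In the calculus $\mathsf{CL}$: (1) the rule Mon$\forall$ (from $b\subseteq a,b\Vdash^\forall A,a\Vdash^\forall A,\Gamma\Rightarrow\Delta$ infer $b\subseteq a,a\Vdash^\forall A,\Gamma\Rightarrow\Delta$) is admissible; (2) the rule L$>$ and the rule L$>^\star$ (from $a\in N(x),x:A>B,\Gamma\Rightarrow\Delta,a\Vdash^\exists A$ and $a\Vdash^\exists A,x\Vdash_aA|B,a\in N(x),x:A>B,\Gamma\Rightarrow\Delta$ infer $a\in N(x),x:A>B,\Gamma\Rightarrow\Delta$) are equivalent, i.e. each is admissible in the calculus containing the other instead.
   Context: Syntax: world labels $x,y,\dots$; neighbourhood labels $a,b,\dots$. Relational atoms $a\in N(x)$, $x\in a$, $a\subseteq b$; labelled formulas: these, $x:A$, $a\Vdash^\exists A$, $a\Vdash^\forall A$, $x\Vdash_aA|B$, for $A,B\in\mathcal{L}::=p\mid\bot\mid A\wedge B\mid A\lor B\mid A\to B\mid A>B$. Sequents $\Gamma\Rightarrow\Delta$: multisets, relational atoms only on the left. Rules of $\mathsf{CL}$ (premisses / conclusion; ''fresh'' = not occurring in conclusion): initial sequents $x:p,\Gamma\Rightarrow\Delta,x:p$ ($p$ atomic), $x:\bot,\Gamma\Rightarrow\Delta$; G3 rules for $\wedge,\vee,\to$ on $x:A$; L$\forall$: $x:A,x\in a,a\Vdash^\forall A,\Gamma\Rightarrow\Delta$ / $x\in a,a\Vdash^\forall A,\Gamma\Rightarrow\Delta$; R$\forall$ (x fresh): $x\in a,\Gamma\Rightarrow\Delta,x:A$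 / $\Gamma\Rightarrow\Delta,a\Vdash^\forall A$; L$\exists$ (x fresh): $x\in a,x:A,\Gamma\Rightarrow\Delta$ / $a\Vdash^\exists A,\Gamma\Rightarrow\Delta$; R$\exists$: $x\in a,\Gamma\Rightarrow\Delta,x:A,a\Vdash^\exists A$ / $x\in a,\Gamma\Rightarrow\Delta,a\Vdash^\exists A$; R$>$ (a fresh): $a\in N(x),a\Vdash^\exists A,\Gamma\Rightarrow\Delta,x\Vdash_aA|B$ / $\Gamma\Rightarrow\Delta,x:A>B$; L$>$: $a\in N(x),x:A>B,\Gamma\Rightarrow\Delta,a\Vdash^\exists A$ and $x\Vdash_aA|B,a\in N(x),x:A>B,\Gamma\Rightarrow\Delta$ / $a\in N(x),x:A>B,\Gamma\Rightarrow\Delta$; R$|$: $c\in N(x),c\subseteq a,\Gamma\Rightarrow\Delta,x\Vdash_aA|B,c\Vdash^\exists A$ and $c\in N(x),c\subseteq a,\Gamma\Rightarrow\Delta,x\Vdash_aA|B,c\Vdash^\forall A\to B$ / $c\in N(x),c\subseteq a,\Gamma\Rightarrow\Delta,x\Vdash_aA|B$; L$|$ (c fresh): $c\in N(x),c\subseteq a,c\Vdash^\exists A,c\Vdash^\forall A\to B,\Gamma\Rightarrow\Delta$ / $x\Vdash_aA|B,\Gamma\Rightarrow\Delta$; Ref: $a\subseteq a,\Gamma\Rightarrow\Delta$ / $\Gamma\Rightarrow\Delta$; Tr: $c\subseteq a,c\subseteq b,b\subseteq a,\Gamma\Rightarrow\Delta$ / $c\subseteq b,b\subseteq a,\Gamma\Rightarrow\Delta$;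 L$\subseteq$: $x\in a,a\subseteq b,x\in b,\Gamma\Rightarrow\Delta$ / $x\in a,a\subseteq b,\Gamma\Rightarrow\Delta$. *)

(* Defs.v *)
From Stdlib Require Import List Permutation.
Import ListNotations.

Inductive form : Type :=
| Var : nat -> form
| Bot : form
| And : form -> form -> form
| Or  : form -> form -> form
| Imp : form -> form -> form
| Cnd : form -> form -> form.   (* A > B *)

Definition wlab := nat.
Definition nlab := nat.

Inductive ratom : Type :=
| RN  : nlab -> wlab -> ratom     (* a ∈ N(x) *)
| RIn : wlab -> nlab -> ratom     (* x ∈ a *)
| RSub : nlab -> nlab -> ratom.   (* a ⊆ b *)

Inductive lform : Type :=
| LW   : wlab -> form -> lform                    (* x : A *)
| LAll : nlab -> form -> lform                    (* a ⊩∀ A *)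
| LEx  : nlab -> form -> lform                    (* a ⊩∃ A *)
| LCnd : wlab -> nlab -> form -> form -> lform.   (* x ⊩_a A|B *)

(* A sequent  R, Γ ⇒ Δ  with R a multiset of relational atoms, Γ, Δ
   multisets of labelled formulas (multisets = lists up to permutation). *)

Definition ratom_w (r : ratom) : list wlab :=
  match r with RN _ x => [x] | RIn x _ => [x] | RSub _ _ => [] end.
Definition ratom_n (r : ratom) : list nlab :=
  match r with RN a _ => [a] | RIn _ a => [a] | RSub a b => [a; b] end.
Definition lform_w (f : lform) : list wlab :=
  match f with LW x _ => [x] | LCnd x _ _ _ => [x] | _ => [] end.
Definition lform_n (f : lform) : list nlab :=
  match f with LW _ _ => [] | LAll a _ => [a] | LEx a _ => [a]
          | LCnd _ a _ _ => [a] end.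

Definition wfresh (x : wlab) (R : list ratom) (G D : list lform) : Prop :=
  ~ In x (flat_map ratom_w R) /\ ~ In x (flat_map lform_w G)
  /\ ~ In x (flat_map lform_w D).
Definition nfresh (a : nlab) (R : list ratom) (G D : list lform) : Prop :=
  ~ In a (flat_map ratom_n R) /\ ~ In a (flat_map lform_n G)
  /\ ~ In a (flat_map lform_n D).

(* Derivability in CL.  If [star] is false, the left rule for > is L>;
   if [star] is true, it is replaced by L>*. *)
Inductive derivable (star : bool) : list ratom -> list lform -> list lform -> Prop :=
| d_perm : forall R R' G G' D D',
    derivable star R G D -> Permutation R R' -> Permutation G G' ->
    Permutation D D' -> derivable star R' G' D'
| d_init : forall x p R G D,
    derivable star R (LW x (Var p) :: G) (LW x (Var p) :: D)
| d_bot : forall x R G D, derivable star R (LW x Bot :: G) D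
| d_Land : forall x A B R G D,
    derivable star R (LW x A :: LW x B :: G) D ->
    derivable star R (LW x (And A B) :: G) D
| d_Rand : forall x A B R G D,
    derivable star R G (LW x A :: D) -> derivable star R G (LW x B :: D) ->
    derivable star R G (LW x (And A B) :: D)
| d_Lor : forall x A B R G D,
    derivable star R (LW x A :: G) D -> derivable star R (LW x B :: G) D ->
    derivable star R (LW x (Or A B) :: G) D
| d_Ror : forall x A B R G D,
    derivable star R G (LW x A :: LW x B :: D) ->
    derivable star R G (LW x (Or A B) :: D)
| d_Limp : forall x A B R G D,
    derivable star R G (LW x A :: D) -> derivable star R (LW x B :: G) D ->
    derivable star R (LW x (Imp A B) :: G) D
| d_Rimp : forall x A B R G D,
    derivable star R (LW x A :: G) (LW x B :: D) ->
    derivable star R G (LW x (Imp A B) :: D)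
| d_Lall : forall x a A R G D,
    derivable star (RIn x a :: R) (LW x A :: LAll a A :: G) D ->
    derivable star (RIn x a :: R) (LAll a A :: G) D
| d_Rall : forall x a A R G D,
    wfresh x R G (LAll a A :: D) ->
    derivable star (RIn x a :: R) G (LW x A :: D) ->
    derivable star R G (LAll a A :: D)
| d_Lex : forall x a A R G D,
    wfresh x R (LEx a A :: G) D ->
    derivable star (RIn x a :: R) (LW x A :: G) D ->
    derivable star R (LEx a A :: G) D
| d_Rex : forall x a A R G D,
    derivable star (RIn x a :: R) G (LW x A :: LEx a A :: D) ->
    derivable star (RIn x a :: R) G (LEx a A :: D)
| d_Rcnd : forall x a A B R G D,
    nfresh a R G (LW x (Cnd A B) :: D) ->
    derivable star (RN a x :: R) (LEx a A :: G) (LCnd x a A B :: D) ->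
    derivable star R G (LW x (Cnd A B) :: D)
| d_Lcnd : forall x a A B R G D,
    star = false ->
    derivable star (RN a x :: R) (LW x (Cnd A B) :: G) (LEx a A :: D) ->
    derivable star (RN a x :: R) (LCnd x a A B :: LW x (Cnd A B) :: G) D ->
    derivable star (RN a x :: R) (LW x (Cnd A B) :: G) D
| d_Lcnd_star : forall x a A B R G D,
    star = true ->
    derivable star (RN a x :: R) (LW x (Cnd A B) :: G) (LEx a A :: D) ->
    derivable star (RN a x :: R)
              (LEx a A :: LCnd x a A B :: LW x (Cnd A B) :: G) D ->
    derivable star (RN a x :: R) (LW x (Cnd A B) :: G) D
| d_Rbar : forall x a c A B R G D,
    derivable star (RN c x :: RSub c a :: R) G (LCnd x a A B :: LEx c A :: D) ->
    derivable star (RN c x :: RSub c a :: R) G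
              (LCnd x a A B :: LAll c (Imp A B) :: D) ->
    derivable star (RN c x :: RSub c a :: R) G (LCnd x a A B :: D)
| d_Lbar : forall x a c A B R G D,
    nfresh c R (LCnd x a A B :: G) D ->
    derivable star (RN c x :: RSub c a :: R) (LEx c A :: LAll c (Imp A B) :: G) D ->
    derivable star R (LCnd x a A B :: G) D
| d_Ref : forall a R G D,
    derivable star (RSub a a :: R) G D -> derivable star R G D
| d_Tr : forall a b c R G D,
    derivable star (RSub c a :: RSub c b :: RSub b a :: R) G D ->
    derivable star (RSub c b :: RSub b a :: R) G D
| d_Lsub : forall x a b R G D,
    derivable star (RIn x a :: RSub a b :: RIn x b :: R) G D ->
    derivable star (RIn x a :: RSub a b :: R) G D.

Definition CL := derivable false.
Definition CLstar := derivable true.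

(* Main.v *)
Require Import Defs.
From Stdlib Require Import List Permutation Arith Lia.
Import ListNotations.

Lemma pl_here {T} (x : T) t : Permutation (x :: t) (x :: t). Proof. reflexivity. Qed.
Lemma pl_cons {T} (x y : T) t t' : Permutation t (x :: t') -> Permutation (y :: t) (x :: y :: t').
Proof. intro H. rewrite H. apply perm_swap. Qed.
Lemma pl_app {T} (x : T) L t t' : Permutation t (x :: t') -> Permutation (L ++ t) (x :: L ++ t').
Proof. intro H. rewrite H. symmetry. apply Permutation_middle. Qed.
Lemma pL_here {T} (L t : list T) : Permutation (L ++ t) (L ++ t). Proof. reflexivity. Qed.
Lemma pL_end {T} (L : list T) : Permutation L (L ++ []). Proof. rewrite app_nil_r; reflexivity. Qed.
Lemma pL_cons {T} (L : list T) y t t' : Permutation t (L ++ t') -> Permutation (y :: t) (L ++ y :: t').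
Proof. intro H. rewrite H. apply Permutation_middle. Qed.
Lemma pL_app {T} (L M t t' : list T) : Permutation t (L ++ t') -> Permutation (M ++ t) (L ++ M ++ t').
Proof. intro H. rewrite H. apply Permutation_app_swap_app. Qed.
Lemma ps_cons {T} (x : T) l1 l2 t' : Permutation l2 (x :: t') -> Permutation l1 t' -> Permutation (x :: l1) l2.
Proof. intros H1 H2. rewrite H1, H2. reflexivity. Qed.
Lemma ps_app {T} (L l1 l2 t' : list T) : Permutation l2 (L ++ t') -> Permutation l1 t' -> Permutation (L ++ l1) l2.
Proof. intros H1 H2. rewrite H1, H2. reflexivity. Qed.
Lemma ps_var {T} (L l2 t' : list T) : Permutation l2 (L ++ t') -> Permutation [] t' -> Permutation L l2.
Proof. intros H1 H2. rewrite H1, <- H2, app_nil_r. reflexivity. Qed.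

Ltac pull :=
  first [ apply pl_here | apply pL_here | apply pL_end
        | apply pl_cons; pull | apply pl_app; pull
        | apply pL_cons; pull | apply pL_app; pull ].

Ltac psolve :=
  simpl; repeat rewrite <- app_assoc; simpl;
  let rec go :=
    match goal with
    | |- Permutation [] [] => apply Permutation_refl
    | |- Permutation (?x :: ?l1) ?l2 => eapply ps_cons; [ pull | go ]
    | |- Permutation (?L ++ ?l1) ?l2 => eapply ps_app; [ pull | go ]
    | |- Permutation ?L ?l2 => eapply ps_var; [ pull | go ]
    end in go.

Goal forall (a b c : nat) (L M N : list nat), Permutation (a :: L ++ (b :: M) ++ [c] ++ N) (N ++ c :: M ++ b :: L ++ [a]).
Proof. intros. psolve. Qed.
Goal forall (a b c : nat) (L M N : list nat), Permutation (a :: L ++ M) (M ++ (a :: L)).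
Proof. intros. psolve. Qed.
Definition prem : Type := (list ratom * list lform * list lform)%type.
Inductive eig : Type := NoEig | EW (x : wlab) | EN (a : nlab).

Definition WL (R : list ratom) (G D : list lform) : list nat :=
  flat_map ratom_w R ++ flat_map lform_w G ++ flat_map lform_w D.
Definition NL (R : list ratom) (G D : list lform) : list nat :=
  flat_map ratom_n R ++ flat_map lform_n G ++ flat_map lform_n D.

Definition eigfresh (e : eig) R G D : Prop :=
  match e with NoEig => True | EW x => ~ In x (WL R G D) | EN a => ~ In a (NL R G D) end.

Inductive rinst (s : bool) : list ratom -> list lform -> list lform -> list prem -> eig -> Prop :=
| ri_init : forall x p, rinst s [] [LW x (Var p)] [LW x (Var p)] [] NoEig
| ri_bot : forall x, rinst s [] [LW x Bot] [] [] NoEig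
| ri_Land : forall x A B, rinst s [] [LW x (And A B)] [] [([], [LW x A; LW x B], [])] NoEig
| ri_Rand : forall x A B, rinst s [] [] [LW x (And A B)] [([], [], [LW x A]); ([], [], [LW x B])] NoEig
| ri_Lor : forall x A B, rinst s [] [LW x (Or A B)] [] [([], [LW x A], []); ([], [LW x B], [])] NoEig
| ri_Ror : forall x A B, rinst s [] [] [LW x (Or A B)] [([], [], [LW x A; LW x B])] NoEig
| ri_Limp : forall x A B, rinst s [] [LW x (Imp A B)] [] [([], [], [LW x A]); ([], [LW x B], [])] NoEig
| ri_Rimp : forall x A B, rinst s [] [] [LW x (Imp A B)] [([], [LW x A], [LW x B])] NoEig
| ri_Lall : forall x a A, rinst s [RIn x a] [LAll a A] [] [([RIn x a], [LW x A; LAll a A], [])] NoEig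
| ri_Rall : forall x a A, rinst s [] [] [LAll a A] [([RIn x a], [], [LW x A])] (EW x)
| ri_Lex : forall x a A, rinst s [] [LEx a A] [] [([RIn x a], [LW x A], [])] (EW x)
| ri_Rex : forall x a A, rinst s [RIn x a] [] [LEx a A] [([RIn x a], [], [LW x A; LEx a A])] NoEig
| ri_Rcnd : forall x a A B, rinst s [] [] [LW x (Cnd A B)] [([RN a x], [LEx a A], [LCnd x a A B])] (EN a)
| ri_Lcnd : forall x a A B, s = false -> rinst s [RN a x] [LW x (Cnd A B)] []
     [([RN a x], [LW x (Cnd A B)], [LEx a A]); ([RN a x], [LCnd x a A B; LW x (Cnd A B)], [])] NoEig
| ri_Lcnds : forall x a A B, s = true -> rinst s [RN a x] [LW x (Cnd A B)] []
     [([RN a x], [LW x (Cnd A B)], [LEx a A]); ([RN a x], [LEx a A; LCnd x a A B; LW x (Cnd A B)], [])] NoEig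
| ri_Rbar : forall x a c A B, rinst s [RN c x; RSub c a] [] [LCnd x a A B]
     [([RN c x; RSub c a], [], [LCnd x a A B; LEx c A]); ([RN c x; RSub c a], [], [LCnd x a A B; LAll c (Imp A B)])] NoEig
| ri_Lbar : forall x a c A B, rinst s [] [LCnd x a A B] []
     [([RN c x; RSub c a], [LEx c A; LAll c (Imp A B)], [])] (EN c)
| ri_Ref : forall a, rinst s [] [] [] [([RSub a a], [], [])] NoEig
| ri_Tr : forall a b c, rinst s [RSub c b; RSub b a] [] [] [([RSub c a; RSub c b; RSub b a], [], [])] NoEig
| ri_Lsub : forall x a b, rinst s [RIn x a; RSub a b] [] [] [([RIn x a; RSub a b; RIn x b], [], [])] NoEig.

Definition pR (p : prem) := fst (fst p).
Definition pG (p : prem) := snd (fst p).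
Definition pD (p : prem) := snd p.

Inductive dh (s : bool) : nat -> list ratom -> list lform -> list lform -> Prop :=
| dh_perm : forall n R R' G G' D D', dh s n R G D -> Permutation R R' -> Permutation G G' ->
    Permutation D D' -> dh s n R' G' D'
| dh_rule : forall n Rc Gc Dc ps e R G D, rinst s Rc Gc Dc ps e ->
    eigfresh e (Rc ++ R) (Gc ++ G) (Dc ++ D) ->
    (forall p, In p ps -> dh s n (pR p ++ R) (pG p ++ G) (pD p ++ D)) ->
    dh s (S n) (Rc ++ R) (Gc ++ G) (Dc ++ D).

Lemma dh_p s n R G D R' G' D' : dh s n R G D -> Permutation R R' -> Permutation G G' ->
    Permutation D D' -> dh s n R' G' D'.
Proof. intros; eapply dh_perm; eauto. Qed.

Lemma dh_mono s n R G D : dh s n R G D -> forall m, n <= m -> dh s m R G D.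
Proof.
  induction 1; intros m Hm.
  - eapply dh_perm; eauto.
  - destruct m as [|m]; [lia|]. eapply dh_rule; eauto. intros p Hp. apply H2; auto; lia.
Qed.

Lemma dh_inv s n R G D : dh s n R G D -> exists m Rc Gc Dc ps e R1 G1 D1,
  n = S m /\ rinst s Rc Gc Dc ps e /\ eigfresh e (Rc ++ R1) (Gc ++ G1) (Dc ++ D1) /\
  (forall p, In p ps -> dh s m (pR p ++ R1) (pG p ++ G1) (pD p ++ D1)) /\
  Permutation (Rc ++ R1) R /\ Permutation (Gc ++ G1) G /\ Permutation (Dc ++ D1) D.
Proof.
  induction 1.
  - destruct IHdh as (m & Rc & Gc & Dc & ps & e & R1 & G1 & D1 & H4 & H5 & H6 & H7 & H8 & H9 & H10).
    exists m, Rc, Gc, Dc, ps, e, R1, G1, D1; repeat split; auto; eapply perm_trans; eauto.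
  - exists n, Rc, Gc, Dc, ps, e, R, G, D; repeat split; auto.
Qed.

Lemma dh_rule_p s n Rc Gc Dc ps e R G D R' G' D' : rinst s Rc Gc Dc ps e ->
    eigfresh e (Rc ++ R) (Gc ++ G) (Dc ++ D) ->
    (forall p, In p ps -> dh s n (pR p ++ R) (pG p ++ G) (pD p ++ D)) ->
    Permutation (Rc ++ R) R' -> Permutation (Gc ++ G) G' -> Permutation (Dc ++ D) D' ->
    dh s (S n) R' G' D'.
Proof. intros. eapply dh_perm; [eapply dh_rule|..]; eauto. Qed.

Lemma all_ex_mono s (ps : list prem) (F : prem -> list ratom * list lform * list lform) :
  (forall p, In p ps -> exists m, dh s m (fst (fst (F p))) (snd (fst (F p))) (snd (F p))) ->
  exists m, forall p, In p ps -> dh s m (fst (fst (F p))) (snd (fst (F p))) (snd (F p)).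
Proof.
  induction ps as [|p0 ps IH]; intros H.
  - exists 0; intros p [].
  - destruct (H p0 (or_introl eq_refl)) as [m0 Hm0].
    destruct IH as [m1 Hm1]. { intros; apply H; right; auto. }
    exists (max m0 m1). intros p [<-|Hp].
    + eapply dh_mono; eauto; lia.
    + eapply dh_mono; eauto; lia.
Qed.

Lemma wfresh_iff x R G D : wfresh x R G D <-> ~ In x (WL R G D).
Proof. unfold wfresh, WL. rewrite !in_app_iff. tauto. Qed.
Lemma nfresh_iff x R G D : nfresh x R G D <-> ~ In x (NL R G D).
Proof. unfold nfresh, NL. rewrite !in_app_iff. tauto. Qed.

Ltac rl c R G D :=
  eapply (dh_rule_p _ _ _ _ _ _ _ R G D); [eapply c; eauto| | | psolve | psolve | psolve];
  [ cbn [eigfresh app]; first [exact I | apply (proj1 (wfresh_iff _ _ _ _)); eassumption | apply (proj1 (nfresh_iff _ _ _ _)); eassumption] | ].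
Ltac prems := let p := fresh "p" in intros p Hp; simpl in Hp;
  repeat (destruct Hp as [<-|Hp]); [..| contradiction]; unfold pR, pG, pD; simpl;
  first [eassumption | eapply dh_mono; [eassumption | lia]].

Lemma der_dh s R G D : derivable s R G D -> exists n, dh s n R G D.
Proof.
  induction 1;
  repeat match goal with H : exists _, _ |- _ => destruct H end.
  - eexists; eapply dh_perm; eauto.
  - exists 1. rl ri_init R G D. prems.
  - exists 1. rl ri_bot R G D. prems.
  - eexists. rl ri_Land R G D. prems.
  - exists (S (max x0 x1)). rl ri_Rand R G D. prems.
  - exists (S (max x0 x1)). rl ri_Lor R G D. prems.
  - eexists. rl ri_Ror R G D. prems.
  - exists (S (max x0 x1)). rl ri_Limp R G D. prems.
  - eexists. rl ri_Rimp R G D. prems.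
  - eexists. rl ri_Lall R G D. prems.
  - eexists. rl ri_Rall R G D. prems.
  - eexists. rl ri_Lex R G D. prems.
  - eexists. rl ri_Rex R G D. prems.
  - eexists. rl ri_Rcnd R G D. prems.
  - exists (S (max x0 x1)). rl ri_Lcnd R G D. prems.
  - exists (S (max x0 x1)). rl ri_Lcnds R G D. prems.
  - exists (S (max x0 x1)). rl ri_Rbar R G D. prems.
  - eexists. rl ri_Lbar R G D. prems.
  - eexists. rl ri_Ref R G D. prems.
  - eexists. rl ri_Tr R G D. prems.
  - eexists. rl ri_Lsub R G D. prems.
Qed.

Lemma dh_der s n R G D : dh s n R G D -> derivable s R G D.
Proof.
  induction 1.
  - eapply d_perm; eauto.
  - rename H2 into IH. destruct H; simpl in *;
    try (specialize (IH _ (or_introl eq_refl)) as IH1);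
    try (specialize (IH _ (or_intror (or_introl eq_refl))) as IH2);
    simpl in *.
    all: try (econstructor; solve [eauto | apply wfresh_iff; auto | apply nfresh_iff; auto]).
    + eapply d_Rall; [apply wfresh_iff; exact H0 | exact IH1].
    + eapply d_Lex; [apply wfresh_iff; exact H0 | exact IH1].
    + eapply d_Rcnd; [apply nfresh_iff; exact H0 | exact IH1].
    + eapply d_Lbar; [apply nfresh_iff; exact H0 | exact IH1].
Qed.

Definition sr (fw fn : nat -> nat) (r : ratom) : ratom :=
  match r with RN a x => RN (fn a) (fw x) | RIn x a => RIn (fw x) (fn a) | RSub a b => RSub (fn a) (fn b) end.
Definition sl (fw fn : nat -> nat) (f : lform) : lform :=
  match f with LW x A => LW (fw x) A | LAll a A => LAll (fn a) A | LEx a A => LEx (fn a) A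
  | LCnd x a A B => LCnd (fw x) (fn a) A B end.
Definition sp fw fn (p : prem) : prem :=
  (map (sr fw fn) (pR p), map (sl fw fn) (pG p), map (sl fw fn) (pD p)).
Definition se fw fn (e : eig) : eig :=
  match e with NoEig => NoEig | EW x => EW (fw x) | EN a => EN (fn a) end.
Definition upd (f : nat -> nat) (x y : nat) : nat -> nat := fun z => if Nat.eqb z x then y else f z.

Lemma rinst_map s fw fn Rc Gc Dc ps e : rinst s Rc Gc Dc ps e ->
  rinst s (map (sr fw fn) Rc) (map (sl fw fn) Gc) (map (sl fw fn) Dc) (map (sp fw fn) ps) (se fw fn e).
Proof.
  destruct 1; unfold sp, pR, pG, pD; simpl.
  all: first [ apply ri_Lcnd; assumption | apply ri_Lcnds; assumption | constructor ].
Qed.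

Lemma fm_rw fw fn R : flat_map ratom_w (map (sr fw fn) R) = map fw (flat_map ratom_w R).
Proof. induction R as [|[] R IH]; simpl; rewrite ?IH; reflexivity. Qed.
Lemma fm_rn fw fn R : flat_map ratom_n (map (sr fw fn) R) = map fn (flat_map ratom_n R).
Proof. induction R as [|[] R IH]; simpl; rewrite ?IH; reflexivity. Qed.
Lemma fm_lw fw fn G : flat_map lform_w (map (sl fw fn) G) = map fw (flat_map lform_w G).
Proof. induction G as [|[] G IH]; simpl; rewrite ?IH; reflexivity. Qed.
Lemma fm_ln fw fn G : flat_map lform_n (map (sl fw fn) G) = map fn (flat_map lform_n G).
Proof. induction G as [|[] G IH]; simpl; rewrite ?IH; reflexivity. Qed.

Lemma WL_map fw fn R G D : WL (map (sr fw fn) R) (map (sl fw fn) G) (map (sl fw fn) D) = map fw (WL R G D).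
Proof. unfold WL. rewrite fm_rw, !fm_lw, !map_app. reflexivity. Qed.
Lemma NL_map fw fn R G D : NL (map (sr fw fn) R) (map (sl fw fn) G) (map (sl fw fn) D) = map fn (NL R G D).
Proof. unfold NL. rewrite fm_rn, !fm_ln, !map_app. reflexivity. Qed.

Lemma agree_r fw fn fw' fn' R :
  (forall y, In y (flat_map ratom_w R) -> fw y = fw' y) ->
  (forall a, In a (flat_map ratom_n R) -> fn a = fn' a) ->
  map (sr fw fn) R = map (sr fw' fn') R.
Proof.
  induction R as [|r R IH]; intros Hw Hn; simpl; [reflexivity|].
  f_equal.
  - destruct r; simpl in *; f_equal; first [apply Hw | apply Hn]; simpl; auto.
  - apply IH; intros; [apply Hw | apply Hn]; simpl; rewrite in_app_iff; auto.
Qed.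
Lemma agree_l fw fn fw' fn' G :
  (forall y, In y (flat_map lform_w G) -> fw y = fw' y) ->
  (forall a, In a (flat_map lform_n G) -> fn a = fn' a) ->
  map (sl fw fn) G = map (sl fw' fn') G.
Proof.
  induction G as [|r G IH]; intros Hw Hn; simpl; [reflexivity|].
  f_equal.
  - destruct r; simpl in *; f_equal; first [apply Hw | apply Hn]; simpl; auto.
  - apply IH; intros; [apply Hw | apply Hn]; simpl; rewrite in_app_iff; auto.
Qed.

Lemma sr_id R : map (sr (fun z => z) (fun z => z)) R = R.
Proof. induction R as [|[] R IH]; simpl; rewrite ?IH; reflexivity. Qed.
Lemma sl_id G : map (sl (fun z => z) (fun z => z)) G = G.
Proof. induction G as [|[] G IH]; simpl; rewrite ?IH; reflexivity. Qed.

Lemma fresh_nat (l : list nat) : exists x, ~ In x l.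
Proof.
  exists (S (list_sum l)). intro H.
  assert (forall y, In y l -> y <= list_sum l).
  { clear H. induction l as [|z l IH]; simpl; intros y Hy; [contradiction|].
    destruct Hy as [<-|Hy]; [lia|]. specialize (IH _ Hy); lia. }
  apply H0 in H. lia.
Qed.

Lemma WL_app R1 R2 G1 G2 D1 D2 y : In y (WL (R1 ++ R2) (G1 ++ G2) (D1 ++ D2)) <->
  In y (WL R1 G1 D1) \/ In y (WL R2 G2 D2).
Proof. unfold WL. rewrite !flat_map_app, !in_app_iff. tauto. Qed.
Lemma NL_app R1 R2 G1 G2 D1 D2 y : In y (NL (R1 ++ R2) (G1 ++ G2) (D1 ++ D2)) <->
  In y (NL R1 G1 D1) \/ In y (NL R2 G2 D2).
Proof. unfold NL. rewrite !flat_map_app, !in_app_iff. tauto. Qed.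

Lemma upd_eq f x y : upd f x y x = y.
Proof. unfold upd. rewrite Nat.eqb_refl. reflexivity. Qed.
Lemma upd_neq f x y z : z <> x -> upd f x y z = f z.
Proof. unfold upd. intro H. apply Nat.eqb_neq in H. rewrite H. reflexivity. Qed.

Lemma agree_seq fw fn fw' fn' R G D :
  (forall y, In y (WL R G D) -> fw y = fw' y) -> (forall a, In a (NL R G D) -> fn a = fn' a) ->
  map (sr fw fn) R = map (sr fw' fn') R /\ map (sl fw fn) G = map (sl fw' fn') G /\
  map (sl fw fn) D = map (sl fw' fn') D.
Proof.
  unfold WL, NL; intros Hw Hn; repeat split;
  first [apply agree_r | apply agree_l]; intros; first [apply Hw | apply Hn]; rewrite !in_app_iff; auto.
Qed.

Lemma dh_subst s n : forall R G D, dh s n R G D -> forall fw fn,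
  dh s n (map (sr fw fn) R) (map (sl fw fn) G) (map (sl fw fn) D).
Proof.
  induction n as [|n IH]; intros R G D H fw fn;
  destruct (dh_inv _ _ _ _ _ H) as (m & Rc & Gc & Dc & ps & e & R1 & G1 & D1 & Hm & Hri & Hf & Hps & PR & PG & PD);
  [discriminate|]. injection Hm as Hm; subst n.
  assert (Hgen : forall fw' fn',
     map (sr fw' fn') Rc = map (sr fw fn) Rc -> map (sr fw' fn') R1 = map (sr fw fn) R1 ->
     map (sl fw' fn') Gc = map (sl fw fn) Gc -> map (sl fw' fn') G1 = map (sl fw fn) G1 ->
     map (sl fw' fn') Dc = map (sl fw fn) Dc -> map (sl fw' fn') D1 = map (sl fw fn) D1 ->
     eigfresh (se fw' fn' e) (map (sr fw fn) (Rc ++ R1)) (map (sl fw fn) (Gc ++ G1)) (map (sl fw fn) (Dc ++ D1)) ->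
     dh s (S m) (map (sr fw fn) R) (map (sl fw fn) G) (map (sl fw fn) D)).
  { intros fw' fn' E1 E2 E3 E4 E5 E6 Hfr.
    rewrite !map_app in Hfr.
    apply (dh_rule_p s m (map (sr fw fn) Rc) (map (sl fw fn) Gc) (map (sl fw fn) Dc) (map (sp fw' fn') ps)
      (se fw' fn' e) (map (sr fw fn) R1) (map (sl fw fn) G1) (map (sl fw fn) D1)).
    - rewrite <- E1, <- E3, <- E5. apply (rinst_map s fw' fn'); exact Hri.
    - exact Hfr.
    - intros p' Hp'. apply in_map_iff in Hp' as (p & <- & Hp).
      specialize (IH _ _ _ (Hps p Hp) fw' fn').
      unfold sp, pR, pG, pD in *; simpl. rewrite !map_app in IH.
      rewrite <- E2, <- E4, <- E6. exact IH.
    - rewrite <- map_app. apply Permutation_map. exact PR.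
    - rewrite <- map_app. apply Permutation_map. exact PG.
    - rewrite <- map_app. apply Permutation_map. exact PD. }
  destruct e as [|x|a].
  - apply (Hgen fw fn); auto.
  - destruct (fresh_nat (WL (map (sr fw fn) (Rc ++ R1)) (map (sl fw fn) (Gc ++ G1)) (map (sl fw fn) (Dc ++ D1)))) as [x' Hx'].
    simpl in Hf.
    assert (Ha : forall y, In y (WL (Rc ++ R1) (Gc ++ G1) (Dc ++ D1)) -> upd fw x x' y = fw y).
    { intros y Hy. apply upd_neq. intros ->. contradiction. }
    destruct (agree_seq (upd fw x x') fn fw fn Rc Gc Dc) as (E1 & E3 & E5);
      [intros; apply Ha; apply WL_app; auto | auto |].
    destruct (agree_seq (upd fw x x') fn fw fn R1 G1 D1) as (E2 & E4 & E6);
      [intros; apply Ha; apply WL_app; auto | auto |].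
    apply (Hgen (upd fw x x') fn); auto.
    simpl. rewrite upd_eq. exact Hx'.
  - destruct (fresh_nat (NL (map (sr fw fn) (Rc ++ R1)) (map (sl fw fn) (Gc ++ G1)) (map (sl fw fn) (Dc ++ D1)))) as [a' Ha'].
    simpl in Hf.
    assert (Ha : forall y, In y (NL (Rc ++ R1) (Gc ++ G1) (Dc ++ D1)) -> upd fn a a' y = fn y).
    { intros y Hy. apply upd_neq. intros ->. contradiction. }
    destruct (agree_seq fw (upd fn a a') fw fn Rc Gc Dc) as (E1 & E3 & E5);
      [auto | intros; apply Ha; apply NL_app; auto |].
    destruct (agree_seq fw (upd fn a a') fw fn R1 G1 D1) as (E2 & E4 & E6);
      [auto | intros; apply Ha; apply NL_app; auto |].
    apply (Hgen fw (upd fn a a')); auto.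
    simpl. rewrite upd_eq. exact Ha'.
Qed.

Lemma WL_perm R G D R' G' D' y : Permutation R R' -> Permutation G G' -> Permutation D D' ->
  (In y (WL R G D) <-> In y (WL R' G' D')).
Proof. intros H1 H2 H3. unfold WL. rewrite H1, H2, H3. reflexivity. Qed.
Lemma NL_perm R G D R' G' D' y : Permutation R R' -> Permutation G G' -> Permutation D D' ->
  (In y (NL R G D) <-> In y (NL R' G' D')).
Proof. intros H1 H2 H3. unfold NL. rewrite H1, H2, H3. reflexivity. Qed.

Lemma fm_incl {T} (g : T -> list nat) l l' : incl l l' -> incl (flat_map g l) (flat_map g l').
Proof. intros H y Hy. apply in_flat_map in Hy as (z & Hz & Hy). apply in_flat_map. eauto. Qed.
Lemma WL_incl R G D R' G' D' y : incl R R' -> incl G G' -> incl D D' ->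
  In y (WL R G D) -> In y (WL R' G' D').
Proof.
  intros H1 H2 H3. unfold WL. rewrite !in_app_iff.
  intros [H|[H|H]]; [left|right;left|right;right]; eapply fm_incl; eauto.
Qed.
Lemma NL_incl R G D R' G' D' y : incl R R' -> incl G G' -> incl D D' ->
  In y (NL R G D) -> In y (NL R' G' D').
Proof.
  intros H1 H2 H3. unfold NL. rewrite !in_app_iff.
  intros [H|[H|H]]; [left|right;left|right;right]; eapply fm_incl; eauto.
Qed.
Lemma WL_G f R G D y : In f G -> In y (lform_w f) -> In y (WL R G D).
Proof. intros H1 H2. unfold WL. rewrite !in_app_iff. right; left. apply in_flat_map; eauto. Qed.
Lemma WL_D f R G D y : In f D -> In y (lform_w f) -> In y (WL R G D).
Proof. intros H1 H2. unfold WL. rewrite !in_app_iff. right; right. apply in_flat_map; eauto. Qed.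
Lemma NL_G f R G D y : In f G -> In y (lform_n f) -> In y (NL R G D).
Proof. intros H1 H2. unfold NL. rewrite !in_app_iff. right; left. apply in_flat_map; eauto. Qed.
Lemma NL_D f R G D y : In f D -> In y (lform_n f) -> In y (NL R G D).
Proof. intros H1 H2. unfold NL. rewrite !in_app_iff. right; right. apply in_flat_map; eauto. Qed.
Lemma WL_R r R G D y : In r R -> In y (ratom_w r) -> In y (WL R G D).
Proof. intros H1 H2. unfold WL. rewrite !in_app_iff. left. apply in_flat_map; eauto. Qed.
Lemma NL_R r R G D y : In r R -> In y (ratom_n r) -> In y (NL R G D).
Proof. intros H1 H2. unfold NL. rewrite !in_app_iff. left. apply in_flat_map; eauto. Qed.

Definition eig_avoid (e : eig) (AW AN : list nat) : Prop :=
  match e with NoEig => True | EW x => ~ In x AW | EN a => ~ In a AN end.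

Lemma rinst_Rc_keep s Rc Gc Dc ps e p r : rinst s Rc Gc Dc ps e -> In p ps -> In r Rc -> In r (pR p).
Proof.
  intros H Hp Hr; destruct H; simpl in Hp; repeat destruct Hp as [<-|Hp]; try contradiction;
  unfold pR; simpl in *; tauto.
Qed.

Lemma rinst_LAll_keep s Rc Gc Dc ps e p a A : rinst s Rc Gc Dc ps e -> In p ps -> In (LAll a A) Gc -> In (LAll a A) (pG p).
Proof.
  intros H Hp Hr; destruct H; simpl in Hp; repeat destruct Hp as [<-|Hp]; try contradiction;
  unfold pG; simpl in *; repeat destruct Hr as [Hr|Hr]; try discriminate; try contradiction; auto.
Qed.

Lemma rinst_len s Rc Gc Dc ps e : rinst s Rc Gc Dc ps e -> length Gc <= 1 /\ length Dc <= 1 /\ length Rc <= 2.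
Proof. destruct 1; simpl; lia. Qed.

Lemma perm_single {T} (Gc : list T) f Gc' : length Gc <= 1 -> Permutation Gc (f :: Gc') -> Gc = [f] /\ Gc' = [].
Proof.
  intros Hl HP. destruct Gc as [|g [|g' Gc]]; simpl in Hl; try lia.
  - apply Permutation_nil in HP; discriminate. 
  - apply Permutation_length_1_inv in HP. injection HP as -> ->. auto.
Qed.

Lemma perm_split {T} (Gc G1 G : list T) f : Permutation (Gc ++ G1) (f :: G) ->
  (exists G1', Permutation G1 (f :: G1') /\ Permutation G (Gc ++ G1')) \/
  (exists Gc', Permutation Gc (f :: Gc') /\ Permutation G (Gc' ++ G1)).
Proof.
  intros HP. assert (Hin : In f (Gc ++ G1)) by (rewrite HP; left; auto).
  apply in_app_or in Hin as [Hin|Hin]; apply in_split in Hin as (l1 & l2 & ->).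
  - right. exists (l1 ++ l2). split; [psolve|].
    apply Permutation_cons_inv with f. rewrite <- HP. psolve.
  - left. exists (l1 ++ l2). split; [psolve|].
    apply Permutation_cons_inv with f. rewrite <- HP. psolve.
Qed.

Lemma subst_id_seq y z R G D : ~ In y (WL R G D) ->
  map (sr (upd (fun u => u) y z) (fun u => u)) R = R /\
  map (sl (upd (fun u => u) y z) (fun u => u)) G = G /\
  map (sl (upd (fun u => u) y z) (fun u => u)) D = D.
Proof.
  intros H. destruct (agree_seq (upd (fun u => u) y z) (fun u => u) (fun u => u) (fun u => u) R G D)
    as (E1 & E2 & E3).
  - intros w Hw. apply upd_neq. intros ->; contradiction.
  - auto.
  - rewrite E1, E2, E3, sr_id, !sl_id. auto.
Qed.
Lemma subst_id_seqN y z R G D : ~ In y (NL R G D) ->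
  map (sr (fun u => u) (upd (fun u => u) y z)) R = R /\
  map (sl (fun u => u) (upd (fun u => u) y z)) G = G /\
  map (sl (fun u => u) (upd (fun u => u) y z)) D = D.
Proof.
  intros H. destruct (agree_seq (fun u => u) (upd (fun u => u) y z) (fun u => u) (fun u => u) R G D)
    as (E1 & E2 & E3).
  - auto.
  - intros w Hw. apply upd_neq. intros ->; contradiction.
  - rewrite E1, E2, E3, sr_id, !sl_id. auto.
Qed.

Lemma rename_rule s m Rc Gc Dc ps e R1 G1 D1 (AW AN : list nat) :
  rinst s Rc Gc Dc ps e -> eigfresh e (Rc ++ R1) (Gc ++ G1) (Dc ++ D1) ->
  (forall p, In p ps -> dh s m (pR p ++ R1) (pG p ++ G1) (pD p ++ D1)) ->
  exists ps' e', rinst s Rc Gc Dc ps' e' /\ eigfresh e' (Rc ++ R1) (Gc ++ G1) (Dc ++ D1) /\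
    eig_avoid e' AW AN /\ (forall p, In p ps' -> dh s m (pR p ++ R1) (pG p ++ G1) (pD p ++ D1)).
Proof.
  intros Hri Hf Hps. destruct e as [|x|a].
  - exists ps, NoEig; repeat split; auto.
  - destruct (fresh_nat (AW ++ WL (Rc ++ R1) (Gc ++ G1) (Dc ++ D1))) as [x' Hx'].
    rewrite in_app_iff in Hx'.
    simpl in Hf. assert (Hf1 : ~ In x (WL Rc Gc Dc)) by (intro; apply Hf; apply WL_app; auto).
    assert (Hf2 : ~ In x (WL R1 G1 D1)) by (intro; apply Hf; apply WL_app; auto).
    pose proof (subst_id_seq x x' _ _ _ Hf1) as (E1 & E2 & E3).
    pose proof (subst_id_seq x x' _ _ _ Hf2) as (E4 & E5 & E6).
    exists (map (sp (upd (fun u => u) x x') (fun u => u)) ps), (EW x').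
    repeat split.
    + pose proof (rinst_map s (upd (fun u => u) x x') (fun u => u) _ _ _ _ _ Hri) as H.
      simpl in H. rewrite upd_eq, E1, E2, E3 in H. exact H.
    + simpl. tauto.
    + simpl. tauto.
    + intros p' Hp'. apply in_map_iff in Hp' as (p & <- & Hp).
      pose proof (dh_subst _ _ _ _ _ (Hps p Hp) (upd (fun u => u) x x') (fun u => u)) as H.
      rewrite !map_app, E4, E5, E6 in H. exact H.
  - destruct (fresh_nat (AN ++ NL (Rc ++ R1) (Gc ++ G1) (Dc ++ D1))) as [x' Hx'].
    rewrite in_app_iff in Hx'.
    simpl in Hf. assert (Hf1 : ~ In a (NL Rc Gc Dc)) by (intro; apply Hf; apply NL_app; auto).
    assert (Hf2 : ~ In a (NL R1 G1 D1)) by (intro; apply Hf; apply NL_app; auto).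
    pose proof (subst_id_seqN a x' _ _ _ Hf1) as (E1 & E2 & E3).
    pose proof (subst_id_seqN a x' _ _ _ Hf2) as (E4 & E5 & E6).
    exists (map (sp (fun u => u) (upd (fun u => u) a x')) ps), (EN x').
    repeat split.
    + pose proof (rinst_map s (fun u => u) (upd (fun u => u) a x') _ _ _ _ _ Hri) as H.
      simpl in H. rewrite upd_eq, E1, E2, E3 in H. exact H.
    + simpl. tauto.
    + simpl. tauto.
    + intros p' Hp'. apply in_map_iff in Hp' as (p & <- & Hp).
      pose proof (dh_subst _ _ _ _ _ (Hps p Hp) (fun u => u) (upd (fun u => u) a x')) as H.
      rewrite !map_app, E4, E5, E6 in H. exact H.
Qed.

Lemma incl_perm {T} (l l' : list T) : Permutation l l' -> incl l l'.
Proof. intros H y Hy. eapply Permutation_in; eauto. Qed.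

Lemma inv_genL s (f : lform) (Ra : list ratom) (Ga Da : list lform) (NW NN : list nat)
 (Hw : forall y, In y (WL Ra Ga Da) -> In y (lform_w f) \/ In y NW)
 (Hn : forall a, In a (NL Ra Ga Da) -> In a (lform_n f) \/ In a NN)
 (Hp : forall m Rc Dc ps e R1 G1 D1, rinst s Rc [f] Dc ps e -> eigfresh e (Rc++R1) (f::G1) (Dc++D1) ->
     (forall p, In p ps -> dh s m (pR p ++ R1) (pG p ++ G1) (pD p ++ D1)) ->
     dh s (S m) (Ra ++ Rc ++ R1) (Ga ++ G1) (Da ++ Dc ++ D1)) :
 forall n R G D, dh s n R (f::G) D -> dh s n (Ra ++ R) (Ga ++ G) (Da ++ D).
Proof.
  induction n as [|n IH]; intros R G D H;
  destruct (dh_inv _ _ _ _ _ H) as (m & Rc & Gc & Dc & ps & e & R1 & G1 & D1 & Hm & Hri & Hf & Hps & PR & PG & PD);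
  [discriminate|]. injection Hm as Hm; subst n.
  destruct (perm_split _ _ _ _ PG) as [(G1' & P1 & P2) | (Gc' & P1 & P2)].
  - destruct (rename_rule _ _ _ _ _ _ _ R1 G1 D1 NW NN Hri Hf Hps) as (ps' & e' & Hri' & Hf' & Hav & Hps').
    apply (dh_rule_p s m Rc Gc Dc ps' e' (Ra ++ R1) (Ga ++ G1') (Da ++ D1)).
    + exact Hri'.
    + destruct e' as [|x|a]; simpl in *; [exact I| |].
      * intro Hin. apply WL_app in Hin as [Hin|Hin]; [apply Hf'; apply WL_app; auto|].
        apply WL_app in Hin as [Hin|Hin].
        -- apply Hw in Hin as [Hin|Hin]; [|contradiction].
           apply Hf'; apply WL_app; right. eapply WL_G; [|exact Hin]. rewrite P1; left; auto.
        -- apply Hf'; apply WL_app; right. revert Hin; apply WL_incl; try apply incl_refl.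
           intros z Hz. rewrite P1. right; auto.
      * intro Hin. apply NL_app in Hin as [Hin|Hin]; [apply Hf'; apply NL_app; auto|].
        apply NL_app in Hin as [Hin|Hin].
        -- apply Hn in Hin as [Hin|Hin]; [|contradiction].
           apply Hf'; apply NL_app; right. eapply NL_G; [|exact Hin]. rewrite P1; left; auto.
        -- apply Hf'; apply NL_app; right. revert Hin; apply NL_incl; try apply incl_refl.
           intros z Hz. rewrite P1. right; auto.
    + intros p Hp0. specialize (Hps' p Hp0).
      eapply dh_p; [apply (IH (pR p ++ R1) (pG p ++ G1') (pD p ++ D1)); eapply dh_p; [exact Hps' | reflexivity | rewrite P1; psolve | reflexivity] | psolve | psolve | psolve].
    + rewrite <- PR; psolve.
    + rewrite P2; psolve.
    + rewrite <- PD; psolve.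
  - destruct (rinst_len _ _ _ _ _ _ Hri) as (L1 & _ & _).
    destruct (perm_single _ _ _ L1 P1) as [-> ->].
    eapply dh_p; [apply (Hp m Rc Dc ps e R1 G1 D1 Hri Hf Hps) | | |].
    + rewrite <- PR; psolve.
    + rewrite P2; psolve.
    + rewrite <- PD; psolve.
Qed.

Lemma inv_genR s (f : lform) (Ra : list ratom) (Ga Da : list lform) (NW NN : list nat)
 (Hw : forall y, In y (WL Ra Ga Da) -> In y (lform_w f) \/ In y NW)
 (Hn : forall a, In a (NL Ra Ga Da) -> In a (lform_n f) \/ In a NN)
 (Hp : forall m Rc Gc ps e R1 G1 D1, rinst s Rc Gc [f] ps e -> eigfresh e (Rc++R1) (Gc++G1) (f::D1) ->
     (forall p, In p ps -> dh s m (pR p ++ R1) (pG p ++ G1) (pD p ++ D1)) ->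
     dh s (S m) (Ra ++ Rc ++ R1) (Ga ++ Gc ++ G1) (Da ++ D1)) :
 forall n R G D, dh s n R G (f::D) -> dh s n (Ra ++ R) (Ga ++ G) (Da ++ D).
Proof.
  induction n as [|n IH]; intros R G D H;
  destruct (dh_inv _ _ _ _ _ H) as (m & Rc & Gc & Dc & ps & e & R1 & G1 & D1 & Hm & Hri & Hf & Hps & PR & PG & PD);
  [discriminate|]. injection Hm as Hm; subst n.
  destruct (perm_split _ _ _ _ PD) as [(D1' & P1 & P2) | (Dc' & P1 & P2)].
  - destruct (rename_rule _ _ _ _ _ _ _ R1 G1 D1 NW NN Hri Hf Hps) as (ps' & e' & Hri' & Hf' & Hav & Hps').
    apply (dh_rule_p s m Rc Gc Dc ps' e' (Ra ++ R1) (Ga ++ G1) (Da ++ D1')).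
    + exact Hri'.
    + destruct e' as [|x|a]; simpl in *; [exact I| |].
      * intro Hin. apply WL_app in Hin as [Hin|Hin]; [apply Hf'; apply WL_app; auto|].
        apply WL_app in Hin as [Hin|Hin].
        -- apply Hw in Hin as [Hin|Hin]; [|contradiction].
           apply Hf'; apply WL_app; right. eapply WL_D; [|exact Hin]. rewrite P1; left; auto.
        -- apply Hf'; apply WL_app; right. revert Hin; apply WL_incl; try apply incl_refl.
           intros z Hz. rewrite P1. right; auto.
      * intro Hin. apply NL_app in Hin as [Hin|Hin]; [apply Hf'; apply NL_app; auto|].
        apply NL_app in Hin as [Hin|Hin].
        -- apply Hn in Hin as [Hin|Hin]; [|contradiction].
           apply Hf'; apply NL_app; right. eapply NL_D; [|exact Hin]. rewrite P1; left; auto.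
        -- apply Hf'; apply NL_app; right. revert Hin; apply NL_incl; try apply incl_refl.
           intros z Hz. rewrite P1. right; auto.
    + intros p Hp0. specialize (Hps' p Hp0).
      eapply dh_p; [apply (IH (pR p ++ R1) (pG p ++ G1) (pD p ++ D1')); eapply dh_p; [exact Hps' | reflexivity | reflexivity | rewrite P1; psolve] | psolve | psolve | psolve].
    + rewrite <- PR; psolve.
    + rewrite <- PG; psolve.
    + rewrite P2; psolve.
  - destruct (rinst_len _ _ _ _ _ _ Hri) as (_ & L1 & _).
    destruct (perm_single _ _ _ L1 P1) as [-> ->].
    eapply dh_p; [apply (Hp m Rc Gc ps e R1 G1 D1 Hri Hf Hps) | | |].
    + rewrite <- PR; psolve.
    + rewrite <- PG; psolve.
    + rewrite P2; psolve.
Qed.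

Ltac lab := intros ?y ?Hy; unfold WL, NL in *; simpl in *; intuition (subst; auto).
Ltac prin := intros ?m ?Rc ?Dc ?ps ?e ?R1 ?G1 ?D1 ?Hri ?Hf ?Hps; inversion Hri; subst;
  unfold pR, pG, pD in Hps; simpl in Hps.
Ltac prinR := intros ?m ?Rc ?Gc ?ps ?e ?R1 ?G1 ?D1 ?Hri ?Hf ?Hps; inversion Hri; subst;
  unfold pR, pG, pD in Hps; simpl in Hps.
Ltac getp k := match goal with Hps : forall p, _ -> dh _ _ _ _ _ |- _ =>
  match k with
  | 1 => pose proof (Hps _ (or_introl eq_refl)) as HP
  | 2 => pose proof (Hps _ (or_intror (or_introl eq_refl))) as HP
  end end.
Ltac fin h := simpl in *; eapply dh_mono; [eapply dh_p; [exact h| psolve | psolve | psolve] | lia].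

Lemma inv_Land s n R G D x A B : dh s n R (LW x (And A B) :: G) D -> dh s n R (LW x A :: LW x B :: G) D.
Proof.
  intro H. apply (inv_genL s (LW x (And A B)) [] [LW x A; LW x B] [] [] []) with (n := n); [lab|lab| |exact H].
  prin. getp 1. fin HP.
Qed.
Lemma inv_Lor1 s n R G D x A B : dh s n R (LW x (Or A B) :: G) D -> dh s n R (LW x A :: G) D.
Proof.
  intro H. apply (inv_genL s (LW x (Or A B)) [] [LW x A] [] [] []) with (n := n); [lab|lab| |exact H].
  prin. getp 1. fin HP.
Qed.
Lemma inv_Lor2 s n R G D x A B : dh s n R (LW x (Or A B) :: G) D -> dh s n R (LW x B :: G) D.
Proof.
  intro H. apply (inv_genL s (LW x (Or A B)) [] [LW x B] [] [] []) with (n := n); [lab|lab| |exact H].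
  prin. getp 2. fin HP.
Qed.
Lemma inv_Limp1 s n R G D x A B : dh s n R (LW x (Imp A B) :: G) D -> dh s n R G (LW x A :: D).
Proof.
  intro H. apply (inv_genL s (LW x (Imp A B)) [] [] [LW x A] [] []) with (n := n); [lab|lab| |exact H].
  prin. getp 1. fin HP.
Qed.
Lemma inv_Limp2 s n R G D x A B : dh s n R (LW x (Imp A B) :: G) D -> dh s n R (LW x B :: G) D.
Proof.
  intro H. apply (inv_genL s (LW x (Imp A B)) [] [LW x B] [] [] []) with (n := n); [lab|lab| |exact H].
  prin. getp 2. fin HP.
Qed.
Lemma inv_Rand1 s n R G D x A B : dh s n R G (LW x (And A B) :: D) -> dh s n R G (LW x A :: D).
Proof.
  intro H. apply (inv_genR s (LW x (And A B)) [] [] [LW x A] [] []) with (n := n); [lab|lab| |exact H].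
  prinR. getp 1. fin HP.
Qed.
Lemma inv_Rand2 s n R G D x A B : dh s n R G (LW x (And A B) :: D) -> dh s n R G (LW x B :: D).
Proof.
  intro H. apply (inv_genR s (LW x (And A B)) [] [] [LW x B] [] []) with (n := n); [lab|lab| |exact H].
  prinR. getp 2. fin HP.
Qed.
Lemma inv_Ror s n R G D x A B : dh s n R G (LW x (Or A B) :: D) -> dh s n R G (LW x A :: LW x B :: D).
Proof.
  intro H. apply (inv_genR s (LW x (Or A B)) [] [] [LW x A; LW x B] [] []) with (n := n); [lab|lab| |exact H].
  prinR. getp 1. fin HP.
Qed.
Lemma inv_Rimp s n R G D x A B : dh s n R G (LW x (Imp A B) :: D) -> dh s n R (LW x A :: G) (LW x B :: D).
Proof.
  intro H. apply (inv_genR s (LW x (Imp A B)) [] [LW x A] [LW x B] [] []) with (n := n); [lab|lab| |exact H].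
  prinR. getp 1. fin HP.
Qed.

Lemma fresh_subW x R G D R' G' D' : ~ In x (WL R' G' D') -> incl R R' -> incl G G' -> incl D D' -> ~ In x (WL R G D).
Proof. intros H1 H2 H3 H4 H5. apply H1. eapply WL_incl; eauto. Qed.
Lemma fresh_subN x R G D R' G' D' : ~ In x (NL R' G' D') -> incl R R' -> incl G G' -> incl D D' -> ~ In x (NL R G D).
Proof. intros H1 H2 H3 H4 H5. apply H1. eapply NL_incl; eauto. Qed.

Ltac incl_tac := intros ?z ?Hz; simpl in *; rewrite ?in_app_iff in *; simpl in *; tauto.

Lemma inv_Lex s n R G D a A z : dh s n R (LEx a A :: G) D -> dh s n (RIn z a :: R) (LW z A :: G) D.
Proof.
  intro H. apply (inv_genL s (LEx a A) [RIn z a] [LW z A] [] [z] []) with (n := n); [lab|lab| |exact H].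
  prin. getp 1. simpl in Hf.
  assert (Hx : ~ In x (WL R1 G1 D1)) by (eapply fresh_subW; [exact Hf|incl_tac..]).
  destruct (subst_id_seq x z _ _ _ Hx) as (E1 & E2 & E3).
  pose proof (dh_subst _ _ _ _ _ HP (upd (fun u => u) x z) (fun u => u)) as HQ.
  simpl in HQ. rewrite upd_eq, E1, E2, E3 in HQ. fin HQ.
Qed.
Lemma inv_Rall s n R G D a A z : dh s n R G (LAll a A :: D) -> dh s n (RIn z a :: R) G (LW z A :: D).
Proof.
  intro H. apply (inv_genR s (LAll a A) [RIn z a] [] [LW z A] [z] []) with (n := n); [lab|lab| |exact H].
  prinR. getp 1. simpl in Hf.
  assert (Hx : ~ In x (WL R1 G1 D1)) by (eapply fresh_subW; [exact Hf|incl_tac..]).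
  destruct (subst_id_seq x z _ _ _ Hx) as (E1 & E2 & E3).
  pose proof (dh_subst _ _ _ _ _ HP (upd (fun u => u) x z) (fun u => u)) as HQ.
  simpl in HQ. rewrite upd_eq, E1, E2, E3 in HQ. fin HQ.
Qed.
Lemma inv_Rcnd s n R G D x A B c : dh s n R G (LW x (Cnd A B) :: D) ->
  dh s n (RN c x :: R) (LEx c A :: G) (LCnd x c A B :: D).
Proof.
  intro H. apply (inv_genR s (LW x (Cnd A B)) [RN c x] [LEx c A] [LCnd x c A B] [] [c]) with (n := n); [lab|lab| |exact H].
  prinR. getp 1. simpl in Hf.
  assert (Hx : ~ In a (NL R1 G1 D1)) by (eapply fresh_subN; [exact Hf|incl_tac..]).
  destruct (subst_id_seqN a c _ _ _ Hx) as (E1 & E2 & E3).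
  pose proof (dh_subst _ _ _ _ _ HP (fun u => u) (upd (fun u => u) a c)) as HQ.
  simpl in HQ. rewrite upd_eq, E1, E2, E3 in HQ. fin HQ.
Qed.
Lemma inv_Lbar s n R G D x a A B c : dh s n R (LCnd x a A B :: G) D ->
  dh s n (RN c x :: RSub c a :: R) (LEx c A :: LAll c (Imp A B) :: G) D.
Proof.
  intro H. apply (inv_genL s (LCnd x a A B) [RN c x; RSub c a] [LEx c A; LAll c (Imp A B)] [] [] [c]) with (n := n); [lab|lab| |exact H].
  prin. getp 1. simpl in Hf.
  assert (Hx : ~ In c0 (NL R1 G1 D1)) by (eapply fresh_subN; [exact Hf|incl_tac..]).
  assert (Ha : a <> c0) by (intro; subst; apply Hf; unfold NL; simpl; rewrite !in_app_iff; simpl; auto).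
  destruct (subst_id_seqN c0 c _ _ _ Hx) as (E1 & E2 & E3).
  pose proof (dh_subst _ _ _ _ _ HP (fun u => u) (upd (fun u => u) c0 c)) as HQ.
  simpl in HQ. rewrite upd_eq, (upd_neq _ _ _ _ Ha), E1, E2, E3 in HQ. fin HQ.
Qed.

Lemma perm_double {T} (Rc : list T) r l : length Rc <= 2 -> Permutation Rc (r :: r :: l) -> Rc = [r; r] /\ l = [].
Proof.
  intros Hl HP. pose proof (Permutation_length HP) as HL. simpl in HL.
  destruct Rc as [|r1 [|r2 [|r3 Rc]]]; simpl in *; try lia.
  destruct l; [|simpl in HL; lia].
  assert (Hi1 : In r1 [r; r]) by (rewrite <- HP; left; auto).
  assert (Hi2 : In r2 [r; r]) by (rewrite <- HP; right; left; auto).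
  simpl in Hi1, Hi2. split; [|auto]. f_equal; [|f_equal]; intuition congruence.
Qed.

Lemma rinst_Rc_perm s Rc Gc Dc ps e p : rinst s Rc Gc Dc ps e -> In p ps -> exists ex, Permutation (pR p) (ex ++ Rc).
Proof.
  intros H Hp; destruct H; simpl in Hp; repeat destruct Hp as [<-|Hp]; try contradiction; unfold pR; simpl.
  all: first [ exists []; simpl; reflexivity | eexists; rewrite app_nil_r; reflexivity
             | exists [RSub c a]; reflexivity | exists [RIn x b]; psolve ].
Qed.

Lemma contr_rel s n : forall r R G D, dh s n (r :: r :: R) G D -> dh s n (r :: R) G D.
Proof.
  induction n as [|n IH]; intros r R G D H;
  destruct (dh_inv _ _ _ _ _ H) as (m & Rc & Gc & Dc & ps & e & R1 & G1 & D1 & Hm & Hri & Hf & Hps & PR & PG & PD);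
  [discriminate|]. injection Hm as Hm; subst n.
  destruct (rinst_len _ _ _ _ _ _ Hri) as (_ & _ & L2).
  assert (Hone : forall Rc' R1', Permutation Rc (r :: Rc') -> Permutation R1 (r :: R1') ->
     Permutation R (Rc' ++ R1') -> dh s (S m) (r :: R) G D).
  { intros Rc' R1' P1 P2 P3.
    apply (dh_rule_p s m Rc Gc Dc ps e R1' G1 D1).
    - exact Hri.
    - destruct e; simpl in *; auto; intro Hin; apply Hf; revert Hin;
      [apply WL_incl | apply NL_incl]; try apply incl_refl; apply incl_app; try (apply incl_appl, incl_refl);
      apply incl_appr; intros z Hz; rewrite P2; right; auto.
    - intros p Hp. destruct (rinst_Rc_perm _ _ _ _ _ _ _ Hri Hp) as [ex Hex].
      specialize (Hps p Hp). 
      eapply dh_p; [apply (IH r (ex ++ Rc' ++ R1')); eapply dh_p; [exact Hps| |reflexivity|reflexivity]| | reflexivity|reflexivity].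
      + rewrite Hex, P1, P2. psolve.
      + rewrite Hex, P1. psolve.
    - rewrite P3, P1. psolve.
    - exact PG.
    - exact PD. }
  destruct (perm_split _ _ _ _ PR) as [(R1' & P1 & P2) | (Rc' & P1 & P2)].
  - symmetry in P2. destruct (perm_split _ _ _ _ P2) as [(R1'' & P3 & P4) | (Rc' & P3 & P4)].
    + apply (dh_rule_p s m Rc Gc Dc ps e (r :: R1'') G1 D1).
      * exact Hri.
      * destruct e; simpl in *; auto; intro Hin; apply Hf; revert Hin;
        [apply WL_incl | apply NL_incl]; try apply incl_refl; apply incl_app; try (apply incl_appl, incl_refl);
        apply incl_appr; intros z Hz; rewrite P1, P3; simpl in *; tauto.
      * intros p Hp. specialize (Hps p Hp).
        eapply dh_p; [apply (IH r (pR p ++ R1'')); eapply dh_p; [exact Hps| |reflexivity|reflexivity]| | reflexivity|reflexivity].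
        -- rewrite P1, P3. psolve.
        -- psolve.
      * rewrite P4. psolve.
      * exact PG.
      * exact PD.
    + apply (Hone Rc' R1'); auto.
  - symmetry in P2. destruct (perm_split _ _ _ _ P2) as [(R1' & P3 & P4) | (Rc'' & P3 & P4)].
    + apply (Hone Rc' R1'); auto.
    + assert (P5 : Permutation Rc (r :: r :: Rc'')) by (rewrite P1, P3; reflexivity).
      destruct (perm_double _ _ _ L2 P5) as [-> ->].
      inversion Hri; subst; try discriminate;
      repeat match goal with Hq : RSub _ _ = RSub _ _ |- _ => injection Hq; clear Hq; intros; subst end.
      pose proof (Hps _ (or_introl eq_refl)) as HP. unfold pR, pG, pD in HP; simpl in HP.
      eapply dh_mono with (n := m); [|lia].
      match goal with |- dh _ _ (?r :: _) _ _ =>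
      eapply dh_p; [apply (IH r R1); apply (IH r (r :: R1)); exact HP | | exact PG | exact PD] end.
      rewrite P4. psolve.
Qed.

Lemma contr_rel_back s n r R G D : In r R -> dh s n (r :: R) G D -> dh s n R G D.
Proof.
  intros Hin H. apply in_split in Hin as (l1 & l2 & ->).
  eapply dh_p; [apply (contr_rel s n r (l1 ++ l2)); eapply dh_p; [exact H|psolve|reflexivity|reflexivity] | psolve | reflexivity | reflexivity].
Qed.

Fixpoint fsize (A : form) : nat :=
  match A with Var _ | Bot => 1 | And A B | Or A B | Imp A B => fsize A + fsize B + 1
  | Cnd A B => fsize A + fsize B + 4 end.
Definition wt (f : lform) : nat :=
  match f with LW _ A => fsize A | LAll _ A | LEx _ A => fsize A + 1
  | LCnd _ _ A B => fsize A + fsize B + 3 end.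
Lemma fsize_pos A : 1 <= fsize A. Proof. destruct A; simpl; lia. Qed.
Lemma wt_pos f : 1 <= wt f. Proof. destruct f; simpl; pose proof (fsize_pos f); lia. Qed.

Definition CLa s n f := forall R G D, dh s n R (f :: f :: G) D -> dh s n R (f :: G) D.
Definition CRa s n f := forall R G D, dh s n R G (f :: f :: D) -> dh s n R G (f :: D).

Lemma cL_back s n f R G D : CLa s n f -> In f G -> dh s n R (f :: G) D -> dh s n R G D.
Proof.
  intros C Hin H. apply in_split in Hin as (l1 & l2 & ->).
  eapply dh_p; [apply (C R (l1 ++ l2) D); eapply dh_p; [exact H|reflexivity|psolve|reflexivity] | reflexivity | psolve | reflexivity].
Qed.
Lemma cR_back s n f R G D : CRa s n f -> In f D -> dh s n R G (f :: D) -> dh s n R G D.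
Proof.
  intros C Hin H. apply in_split in Hin as (l1 & l2 & ->).
  eapply dh_p; [apply (C R G (l1 ++ l2)); eapply dh_p; [exact H|reflexivity|reflexivity|psolve] | reflexivity | reflexivity | psolve].
Qed.

Lemma subW s n RR GG DD R G D y z : dh s n (RR ++ R) (GG ++ G) (DD ++ D) -> ~ In y (WL R G D) ->
  dh s n (map (sr (upd (fun u => u) y z) (fun u => u)) RR ++ R)
         (map (sl (upd (fun u => u) y z) (fun u => u)) GG ++ G)
         (map (sl (upd (fun u => u) y z) (fun u => u)) DD ++ D).
Proof.
  intros H Hy. destruct (subst_id_seq y z R G D Hy) as (E1 & E2 & E3).
  pose proof (dh_subst _ _ _ _ _ H (upd (fun u => u) y z) (fun u => u)) as H'.
  rewrite !map_app, E1, E2, E3 in H'. exact H'.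
Qed.
Lemma subN s n RR GG DD R G D y z : dh s n (RR ++ R) (GG ++ G) (DD ++ D) -> ~ In y (NL R G D) ->
  dh s n (map (sr (fun u => u) (upd (fun u => u) y z)) RR ++ R)
         (map (sl (fun u => u) (upd (fun u => u) y z)) GG ++ G)
         (map (sl (fun u => u) (upd (fun u => u) y z)) DD ++ D).
Proof.
  intros H Hy. destruct (subst_id_seqN y z R G D Hy) as (E1 & E2 & E3).
  pose proof (dh_subst _ _ _ _ _ H (fun u => u) (upd (fun u => u) y z)) as H'.
  rewrite !map_app, E1, E2, E3 in H'. exact H'.
Qed.

Lemma perm_split2 {T} (Gc G1 G : list T) f : length Gc <= 1 -> Permutation (Gc ++ G1) (f :: f :: G) ->
  (exists G1', Permutation G1 (f :: f :: G1') /\ Permutation G (Gc ++ G1')) \/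
  (Gc = [f] /\ Permutation G1 (f :: G)).
Proof.
  intros L HP. destruct (perm_split _ _ _ _ HP) as [(G1' & P1 & P2) | (Gc' & P1 & P2)].
  - symmetry in P2. destruct (perm_split _ _ _ _ P2) as [(G1'' & P3 & P4) | (Gc' & P3 & P4)].
    + left. exists G1''. split; [rewrite P1, P3; reflexivity | exact P4].
    + destruct (perm_single _ _ _ L P3) as [-> ->]. right. split; auto. rewrite P1, P4. reflexivity.
  - destruct (perm_single _ _ _ L P1) as [-> ->]. right. split; auto. rewrite P2. reflexivity.
Qed.

Ltac inclG PG := intros ?z ?Hz; simpl in *; repeat destruct Hz as [Hz|Hz]; subst;
  try (rewrite PG; simpl; tauto); tauto.

Lemma princL s w m (IHw : forall n f, wt f <= w -> CLa s n f /\ CRa s n f)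
  (IHm : forall f, wt f <= S w -> CLa s m f /\ CRa s m f) f Rc Dc ps e R1 G1 D1 G :
  wt f <= S w -> rinst s Rc [f] Dc ps e -> eigfresh e (Rc ++ R1) (f :: G1) (Dc ++ D1) ->
  (forall p, In p ps -> dh s m (pR p ++ R1) (pG p ++ G1) (pD p ++ D1)) -> Permutation G1 (f :: G) ->
  dh s (S m) (Rc ++ R1) (f :: G) (Dc ++ D1).
Proof.
  intros Hw Hri Hf Hps PG.
  remember [f] as Gc eqn:HGc.
  destruct Hri as [x p|x|x A B|x A B|x A B|x A B|x A B|x A B|x a A|x a A|x a A|x a A|x a A B
                  |x a A B Hs|x a A B Hs|x a c A B|x a c A B|a|a b c|x a b];
    try discriminate HGc; injection HGc as <-; unfold pR, pG, pD in Hps; simpl in Hps, Hw, Hf.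
  -
    apply (dh_rule_p s m [] [LW x (Var p)] [LW x (Var p)] [] NoEig R1 G D1);
      [apply ri_init | exact I | intros ? [] | psolve | psolve | psolve].
  -
    apply (dh_rule_p s m [] [LW x Bot] [] [] NoEig R1 G D1);
      [apply ri_bot | exact I | intros ? [] | psolve | psolve | psolve].
  -
    apply (dh_rule_p s m [] [LW x (And A B)] [] [([], [LW x A; LW x B], [])] NoEig R1 G D1);
      [apply ri_Land | exact I | | psolve | psolve | psolve].
    intros q [<-|[]]. unfold pR, pG, pD; simpl.
    pose proof (Hps _ (or_introl eq_refl)) as HP.
    destruct (IHw m (LW x A) ltac:(simpl; lia)) as [CA _].
    destruct (IHw m (LW x B) ltac:(simpl; lia)) as [CB _].
    apply (cL_back _ _ _ _ _ _ CA); [simpl; auto|].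
    apply (cL_back _ _ _ _ _ _ CB); [simpl; auto|].
    eapply dh_p; [apply (inv_Land s m R1 (LW x A :: LW x B :: G) D1 x A B); eapply dh_p;
      [exact HP | reflexivity | rewrite PG; psolve | reflexivity] | reflexivity | psolve | reflexivity].
  -
    apply (dh_rule_p s m [] [LW x (Or A B)] [] [([], [LW x A], []); ([], [LW x B], [])] NoEig R1 G D1);
      [apply ri_Lor | exact I | | psolve | psolve | psolve].
    destruct (IHw m (LW x A) ltac:(simpl; lia)) as [CA _].
    destruct (IHw m (LW x B) ltac:(simpl; lia)) as [CB _].
    intros q [<-|[<-|[]]]; unfold pR, pG, pD; simpl.
    + pose proof (Hps _ (or_introl eq_refl)) as HP.
      apply (cL_back _ _ _ _ _ _ CA); [simpl; auto|].
      eapply dh_p; [apply (inv_Lor1 s m R1 (LW x A :: G) D1 x A B); eapply dh_p;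
        [exact HP | reflexivity | rewrite PG; psolve | reflexivity] | reflexivity | psolve | reflexivity].
    + pose proof (Hps _ (or_intror (or_introl eq_refl))) as HP.
      apply (cL_back _ _ _ _ _ _ CB); [simpl; auto|].
      eapply dh_p; [apply (inv_Lor2 s m R1 (LW x B :: G) D1 x A B); eapply dh_p;
        [exact HP | reflexivity | rewrite PG; psolve | reflexivity] | reflexivity | psolve | reflexivity].
  -
    apply (dh_rule_p s m [] [LW x (Imp A B)] [] [([], [], [LW x A]); ([], [LW x B], [])] NoEig R1 G D1);
      [apply ri_Limp | exact I | | psolve | psolve | psolve].
    destruct (IHw m (LW x A) ltac:(simpl; lia)) as [_ CA].
    destruct (IHw m (LW x B) ltac:(simpl; lia)) as [CB _].
    intros q [<-|[<-|[]]]; unfold pR, pG, pD; simpl.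
    + pose proof (Hps _ (or_introl eq_refl)) as HP.
      apply (cR_back _ _ _ _ _ _ CA); [simpl; auto|].
      eapply dh_p; [apply (inv_Limp1 s m R1 G (LW x A :: D1) x A B); eapply dh_p;
        [exact HP | reflexivity | rewrite PG; psolve | reflexivity] | reflexivity | reflexivity | psolve].
    + pose proof (Hps _ (or_intror (or_introl eq_refl))) as HP.
      apply (cL_back _ _ _ _ _ _ CB); [simpl; auto|].
      eapply dh_p; [apply (inv_Limp2 s m R1 (LW x B :: G) D1 x A B); eapply dh_p;
        [exact HP | reflexivity | rewrite PG; psolve | reflexivity] | reflexivity | psolve | reflexivity].
  -
    apply (dh_rule_p s m [RIn x a] [LAll a A] [] [([RIn x a], [LW x A; LAll a A], [])] NoEig R1 G D1);
      [apply ri_Lall | exact I | | psolve | psolve | psolve].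
    intros q [<-|[]]. unfold pR, pG, pD; simpl.
    pose proof (Hps _ (or_introl eq_refl)) as HP.
    destruct (IHm (LAll a A) ltac:(simpl; lia)) as [C _].
    apply (cL_back _ _ _ _ _ _ C); [simpl; auto|].
    eapply dh_p; [exact HP | reflexivity | rewrite PG; psolve | reflexivity].
  -
    apply (dh_rule_p s m [] [LEx a A] [] [([RIn x a], [LW x A], [])] (EW x) R1 G D1);
      [apply ri_Lex | | | psolve | psolve | psolve].
    { simpl. eapply fresh_subW; [exact Hf| apply incl_refl | inclG PG | apply incl_refl]. }
    intros q [<-|[]]. unfold pR, pG, pD; simpl.
    pose proof (Hps _ (or_introl eq_refl)) as HP.
    destruct (fresh_nat (WL (RIn x a :: R1) (LW x A :: G1) D1)) as [y Hy].
    pose proof (inv_Lex s m (RIn x a :: R1) (LW x A :: G) D1 a A y) as H2.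
    assert (H3 : dh s m ([RIn y a] ++ RIn x a :: R1) ([LW y A] ++ LW x A :: G) ([] ++ D1)).
    { apply H2. eapply dh_p; [exact HP | reflexivity | rewrite PG; psolve | reflexivity]. }
    apply (subW _ _ _ _ _ _ _ _ y x) in H3;
      [| eapply fresh_subW; [exact Hy | apply incl_refl | inclG PG | apply incl_refl]].
    cbn [map sr sl app] in H3. rewrite upd_eq in H3.
    destruct (IHw m (LW x A) ltac:(simpl; lia)) as [C _].
    apply (contr_rel_back _ _ (RIn x a)); [left; auto|].
    apply (cL_back _ _ _ _ _ _ C); [left; auto|].
    exact H3.
  -
    apply (dh_rule_p s m [RN a x] [LW x (Cnd A B)] []
      [([RN a x], [LW x (Cnd A B)], [LEx a A]); ([RN a x], [LCnd x a A B; LW x (Cnd A B)], [])] NoEig R1 G D1);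
      [apply ri_Lcnd; auto | exact I | | psolve | psolve | psolve].
    destruct (IHm (LW x (Cnd A B)) ltac:(simpl; lia)) as [C _].
    intros q [<-|[<-|[]]]; unfold pR, pG, pD; simpl.
    + pose proof (Hps _ (or_introl eq_refl)) as HP.
      apply (cL_back _ _ _ _ _ _ C); [simpl; auto|].
      eapply dh_p; [exact HP | reflexivity | rewrite PG; psolve | reflexivity].
    + pose proof (Hps _ (or_intror (or_introl eq_refl))) as HP.
      apply (cL_back _ _ _ _ _ _ C); [simpl; auto|].
      eapply dh_p; [exact HP | reflexivity | rewrite PG; psolve | reflexivity].
  -
    apply (dh_rule_p s m [RN a x] [LW x (Cnd A B)] []
      [([RN a x], [LW x (Cnd A B)], [LEx a A]); ([RN a x], [LEx a A; LCnd x a A B; LW x (Cnd A B)], [])] NoEig R1 G D1);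
      [apply ri_Lcnds; auto | exact I | | psolve | psolve | psolve].
    destruct (IHm (LW x (Cnd A B)) ltac:(simpl; lia)) as [C _].
    intros q [<-|[<-|[]]]; unfold pR, pG, pD; simpl.
    + pose proof (Hps _ (or_introl eq_refl)) as HP.
      apply (cL_back _ _ _ _ _ _ C); [simpl; auto|].
      eapply dh_p; [exact HP | reflexivity | rewrite PG; psolve | reflexivity].
    + pose proof (Hps _ (or_intror (or_introl eq_refl))) as HP.
      apply (cL_back _ _ _ _ _ _ C); [simpl; auto|].
      eapply dh_p; [exact HP | reflexivity | rewrite PG; psolve | reflexivity].
  -
    apply (dh_rule_p s m [] [LCnd x a A B] [] [([RN c x; RSub c a], [LEx c A; LAll c (Imp A B)], [])] (EN c) R1 G D1);
      [apply ri_Lbar | | | psolve | psolve | psolve].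
    { simpl. eapply fresh_subN; [exact Hf| apply incl_refl | inclG PG | apply incl_refl]. }
    intros q [<-|[]]. unfold pR, pG, pD; simpl.
    pose proof (Hps _ (or_introl eq_refl)) as HP.
    destruct (fresh_nat (NL (RN c x :: RSub c a :: R1) (LEx c A :: LAll c (Imp A B) :: G1) D1)) as [c' Hc'].
    pose proof (inv_Lbar s m (RN c x :: RSub c a :: R1) (LEx c A :: LAll c (Imp A B) :: G) D1 x a A B c') as H2.
    assert (H3 : dh s m ([RN c' x; RSub c' a] ++ RN c x :: RSub c a :: R1)
                        ([LEx c' A; LAll c' (Imp A B)] ++ LEx c A :: LAll c (Imp A B) :: G) ([] ++ D1)).
    { apply H2. eapply dh_p; [exact HP | reflexivity | rewrite PG; psolve | reflexivity]. }
    assert (Ha : a <> c') by (intro; subst; apply Hc'; unfold NL; simpl; auto).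
    apply (subN _ _ _ _ _ _ _ _ c' c) in H3;
      [| eapply fresh_subN; [exact Hc' | apply incl_refl | inclG PG | apply incl_refl]].
    cbn [map sr sl app] in H3. rewrite upd_eq, (upd_neq _ _ _ _ Ha) in H3.
    destruct (IHw m (LEx c A) ltac:(simpl; pose proof (fsize_pos B); lia)) as [C1 _].
    destruct (IHw m (LAll c (Imp A B)) ltac:(simpl; lia)) as [C2 _].
    apply (contr_rel_back _ _ (RN c x)); [left; auto|].
    apply (contr_rel_back _ _ (RSub c a)); [simpl; auto|].
    apply (cL_back _ _ _ _ _ _ C1); [simpl; auto|].
    apply (cL_back _ _ _ _ _ _ C2); [simpl; auto|].
    eapply dh_p; [exact H3 | psolve | psolve | reflexivity].
Qed.

Lemma princR s w m (IHw : forall n f, wt f <= w -> CLa s n f /\ CRa s n f)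
  (IHm : forall f, wt f <= S w -> CLa s m f /\ CRa s m f) f Rc Gc ps e R1 G1 D1 D :
  wt f <= S w -> rinst s Rc Gc [f] ps e -> eigfresh e (Rc ++ R1) (Gc ++ G1) (f :: D1) ->
  (forall p, In p ps -> dh s m (pR p ++ R1) (pG p ++ G1) (pD p ++ D1)) -> Permutation D1 (f :: D) ->
  dh s (S m) (Rc ++ R1) (Gc ++ G1) (f :: D).
Proof.
  intros Hw Hri Hf Hps PD.
  remember [f] as Dc eqn:HDc.
  destruct Hri as [x p|x|x A B|x A B|x A B|x A B|x A B|x A B|x a A|x a A|x a A|x a A|x a A B
                  |x a A B Hs|x a A B Hs|x a c A B|x a c A B|a|a b c|x a b];
    try discriminate HDc; injection HDc as <-; unfold pR, pG, pD in Hps; simpl in Hps, Hw, Hf.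
  -
    apply (dh_rule_p s m [] [LW x (Var p)] [LW x (Var p)] [] NoEig R1 G1 D);
      [apply ri_init | exact I | intros ? [] | psolve | psolve | psolve].
  -
    apply (dh_rule_p s m [] [] [LW x (And A B)] [([], [], [LW x A]); ([], [], [LW x B])] NoEig R1 G1 D);
      [apply ri_Rand | exact I | | psolve | psolve | psolve].
    destruct (IHw m (LW x A) ltac:(simpl; lia)) as [_ CA].
    destruct (IHw m (LW x B) ltac:(simpl; lia)) as [_ CB].
    intros q [<-|[<-|[]]]; unfold pR, pG, pD; simpl.
    + pose proof (Hps _ (or_introl eq_refl)) as HP.
      apply (cR_back _ _ _ _ _ _ CA); [simpl; auto|].
      eapply dh_p; [apply (inv_Rand1 s m R1 G1 (LW x A :: D) x A B); eapply dh_p;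
        [exact HP | reflexivity | reflexivity | rewrite PD; psolve] | reflexivity | reflexivity | psolve].
    + pose proof (Hps _ (or_intror (or_introl eq_refl))) as HP.
      apply (cR_back _ _ _ _ _ _ CB); [simpl; auto|].
      eapply dh_p; [apply (inv_Rand2 s m R1 G1 (LW x B :: D) x A B); eapply dh_p;
        [exact HP | reflexivity | reflexivity | rewrite PD; psolve] | reflexivity | reflexivity | psolve].
  -
    apply (dh_rule_p s m [] [] [LW x (Or A B)] [([], [], [LW x A; LW x B])] NoEig R1 G1 D);
      [apply ri_Ror | exact I | | psolve | psolve | psolve].
    intros q [<-|[]]. unfold pR, pG, pD; simpl.
    pose proof (Hps _ (or_introl eq_refl)) as HP.
    destruct (IHw m (LW x A) ltac:(simpl; lia)) as [_ CA].
    destruct (IHw m (LW x B) ltac:(simpl; lia)) as [_ CB].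
    apply (cR_back _ _ _ _ _ _ CA); [simpl; auto|].
    apply (cR_back _ _ _ _ _ _ CB); [simpl; auto|].
    eapply dh_p; [apply (inv_Ror s m R1 G1 (LW x A :: LW x B :: D) x A B); eapply dh_p;
      [exact HP | reflexivity | reflexivity | rewrite PD; psolve] | reflexivity | reflexivity | psolve].
  -
    apply (dh_rule_p s m [] [] [LW x (Imp A B)] [([], [LW x A], [LW x B])] NoEig R1 G1 D);
      [apply ri_Rimp | exact I | | psolve | psolve | psolve].
    intros q [<-|[]]. unfold pR, pG, pD; simpl.
    pose proof (Hps _ (or_introl eq_refl)) as HP.
    destruct (IHw m (LW x A) ltac:(simpl; lia)) as [CA _].
    destruct (IHw m (LW x B) ltac:(simpl; lia)) as [_ CB].
    apply (cL_back _ _ _ _ _ _ CA); [simpl; auto|].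
    apply (cR_back _ _ _ _ _ _ CB); [simpl; auto|].
    eapply dh_p; [apply (inv_Rimp s m R1 (LW x A :: G1) (LW x B :: D) x A B); eapply dh_p;
      [exact HP | reflexivity | reflexivity | rewrite PD; psolve] | reflexivity | reflexivity | reflexivity].
  -
    apply (dh_rule_p s m [] [] [LAll a A] [([RIn x a], [], [LW x A])] (EW x) R1 G1 D);
      [apply ri_Rall | | | psolve | psolve | psolve].
    { simpl. eapply fresh_subW; [exact Hf| apply incl_refl | apply incl_refl | inclG PD]. }
    intros q [<-|[]]. unfold pR, pG, pD; simpl.
    pose proof (Hps _ (or_introl eq_refl)) as HP.
    destruct (fresh_nat (WL (RIn x a :: R1) G1 (LW x A :: D1))) as [y Hy].
    pose proof (inv_Rall s m (RIn x a :: R1) G1 (LW x A :: D) a A y) as H2.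
    assert (H3 : dh s m ([RIn y a] ++ RIn x a :: R1) ([] ++ G1) ([LW y A] ++ LW x A :: D)).
    { apply H2. eapply dh_p; [exact HP | reflexivity | reflexivity | rewrite PD; psolve]. }
    apply (subW _ _ _ _ _ _ _ _ y x) in H3;
      [| eapply fresh_subW; [exact Hy | apply incl_refl | apply incl_refl | inclG PD]].
    cbn [map sr sl app] in H3. rewrite upd_eq in H3.
    destruct (IHw m (LW x A) ltac:(simpl; lia)) as [_ C].
    apply (contr_rel_back _ _ (RIn x a)); [left; auto|].
    apply (cR_back _ _ _ _ _ _ C); [left; auto|].
    exact H3.
  -
    apply (dh_rule_p s m [RIn x a] [] [LEx a A] [([RIn x a], [], [LW x A; LEx a A])] NoEig R1 G1 D);
      [apply ri_Rex | exact I | | psolve | psolve | psolve].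
    intros q [<-|[]]. unfold pR, pG, pD; simpl.
    pose proof (Hps _ (or_introl eq_refl)) as HP.
    destruct (IHm (LEx a A) ltac:(simpl; lia)) as [_ C].
    apply (cR_back _ _ _ _ _ _ C); [simpl; auto|].
    eapply dh_p; [exact HP | reflexivity | reflexivity | rewrite PD; psolve].
  -
    apply (dh_rule_p s m [] [] [LW x (Cnd A B)] [([RN a x], [LEx a A], [LCnd x a A B])] (EN a) R1 G1 D);
      [apply ri_Rcnd | | | psolve | psolve | psolve].
    { simpl. eapply fresh_subN; [exact Hf| apply incl_refl | apply incl_refl | inclG PD]. }
    intros q [<-|[]]. unfold pR, pG, pD; simpl.
    pose proof (Hps _ (or_introl eq_refl)) as HP.
    destruct (fresh_nat (NL (RN a x :: R1) (LEx a A :: G1) (LCnd x a A B :: D1))) as [a' Ha'].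
    pose proof (inv_Rcnd s m (RN a x :: R1) (LEx a A :: G1) (LCnd x a A B :: D) x A B a') as H2.
    assert (H3 : dh s m ([RN a' x] ++ RN a x :: R1) ([LEx a' A] ++ LEx a A :: G1) ([LCnd x a' A B] ++ LCnd x a A B :: D)).
    { apply H2. eapply dh_p; [exact HP | reflexivity | reflexivity | rewrite PD; psolve]. }
    apply (subN _ _ _ _ _ _ _ _ a' a) in H3;
      [| eapply fresh_subN; [exact Ha' | apply incl_refl | apply incl_refl | inclG PD]].
    cbn [map sr sl app] in H3. rewrite upd_eq in H3.
    destruct (IHw m (LEx a A) ltac:(simpl; pose proof (fsize_pos B); lia)) as [C1 _].
    destruct (IHw m (LCnd x a A B) ltac:(simpl; lia)) as [_ C2].
    apply (contr_rel_back _ _ (RN a x)); [left; auto|].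
    apply (cL_back _ _ _ _ _ _ C1); [left; auto|].
    apply (cR_back _ _ _ _ _ _ C2); [left; auto|].
    exact H3.
  -
    apply (dh_rule_p s m [RN c x; RSub c a] [] [LCnd x a A B]
      [([RN c x; RSub c a], [], [LCnd x a A B; LEx c A]); ([RN c x; RSub c a], [], [LCnd x a A B; LAll c (Imp A B)])] NoEig R1 G1 D);
      [apply ri_Rbar | exact I | | psolve | psolve | psolve].
    destruct (IHm (LCnd x a A B) ltac:(simpl; lia)) as [_ C].
    intros q [<-|[<-|[]]]; unfold pR, pG, pD; simpl.
    + pose proof (Hps _ (or_introl eq_refl)) as HP.
      apply (cR_back _ _ _ _ _ _ C); [simpl; auto|].
      eapply dh_p; [exact HP | reflexivity | reflexivity | rewrite PD; psolve].
    + pose proof (Hps _ (or_intror (or_introl eq_refl))) as HP.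
      apply (cR_back _ _ _ _ _ _ C); [simpl; auto|].
      eapply dh_p; [exact HP | reflexivity | reflexivity | rewrite PD; psolve].
Qed.

Lemma contr_all s w : forall n f, wt f <= w -> CLa s n f /\ CRa s n f.
Proof.
  induction w as [|w IHw]; intros n f Hw; [pose proof (wt_pos f); lia|].
  induction n as [|n IHn] in f, Hw |- *.
  - split; intros R G D H; destruct (dh_inv _ _ _ _ _ H) as (m & ? & ? & ? & ? & ? & ? & ? & ? & Hm & _); discriminate.
  - split; intros R G D H;
    destruct (dh_inv _ _ _ _ _ H) as (m & Rc & Gc & Dc & ps & e & R1 & G1 & D1 & Hm & Hri & Hf & Hps & PR & PG & PD);
    injection Hm as Hm; subst m;
    destruct (rinst_len _ _ _ _ _ _ Hri) as (L1 & L2 & _).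
    + destruct (perm_split2 _ _ _ _ L1 PG) as [(G1' & P1 & P2) | (-> & P1)].
      * apply (dh_rule_p s n Rc Gc Dc ps e R1 (f :: G1') D1); [exact Hri | | | exact PR | rewrite P2; psolve | exact PD].
        -- destruct e; simpl in *; auto; intro Hin; apply Hf; revert Hin;
           [apply WL_incl | apply NL_incl]; try apply incl_refl; apply incl_app; try (apply incl_appl, incl_refl);
           apply incl_appr; intros z Hz; rewrite P1; simpl in *; tauto.
        -- intros p Hp. destruct (IHn f Hw) as [C _].
           eapply dh_p; [apply (C (pR p ++ R1) (pG p ++ G1') (pD p ++ D1)); eapply dh_p;
             [exact (Hps p Hp) | reflexivity | rewrite P1; psolve | reflexivity] | reflexivity | psolve | reflexivity].
      * eapply dh_p; [apply (princL s w n IHw IHn f Rc Dc ps e R1 G1 D1 G Hw Hri Hf Hps P1) | exact PR | reflexivity | exact PD].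
    + destruct (perm_split2 _ _ _ _ L2 PD) as [(D1' & P1 & P2) | (-> & P1)].
      * apply (dh_rule_p s n Rc Gc Dc ps e R1 G1 (f :: D1')); [exact Hri | | | exact PR | exact PG | rewrite P2; psolve].
        -- destruct e; simpl in *; auto; intro Hin; apply Hf; revert Hin;
           [apply WL_incl | apply NL_incl]; try apply incl_refl; apply incl_app; try (apply incl_appl, incl_refl);
           apply incl_appr; intros z Hz; rewrite P1; simpl in *; tauto.
        -- intros p Hp. destruct (IHn f Hw) as [_ C].
           eapply dh_p; [apply (C (pR p ++ R1) (pG p ++ G1) (pD p ++ D1')); eapply dh_p;
             [exact (Hps p Hp) | reflexivity | reflexivity | rewrite P1; psolve] | reflexivity | reflexivity | psolve].
      * eapply dh_p; [apply (princR s w n IHw IHn f Rc Gc ps e R1 G1 D1 D Hw Hri Hf Hps P1) | exact PR | exact PG | reflexivity].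
Qed.

Lemma contrL s n f R G D : dh s n R (f :: f :: G) D -> dh s n R (f :: G) D.
Proof. apply (contr_all s (wt f) n f (le_n _)). Qed.

Lemma weak s n : forall R G D, dh s n R G D -> forall Ra Ga Da,
  (forall y, In y (WL Ra Ga Da) -> In y (flat_map ratom_w R)) ->
  (forall a, In a (NL Ra Ga Da) -> In a (flat_map ratom_n R)) ->
  dh s n (Ra ++ R) (Ga ++ G) (Da ++ D).
Proof.
  induction n as [|n IH]; intros R G D H Ra Ga Da Hw Hn;
  destruct (dh_inv _ _ _ _ _ H) as (m & Rc & Gc & Dc & ps & e & R1 & G1 & D1 & Hm & Hri & Hf & Hps & PR & PG & PD);
  [discriminate|]. injection Hm as Hm; subst n.
  apply (dh_rule_p s m Rc Gc Dc ps e (Ra ++ R1) (Ga ++ G1) (Da ++ D1)).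
  - exact Hri.
  - destruct e as [|x|a]; simpl in *; auto; intro Hin.
    + apply WL_app in Hin as [Hin|Hin]; [apply Hf; apply WL_app; auto|].
      apply WL_app in Hin as [Hin|Hin]; [|apply Hf; apply WL_app; auto].
      apply Hw in Hin. rewrite <- PR in Hin. apply Hf. unfold WL. rewrite !in_app_iff. auto.
    + apply NL_app in Hin as [Hin|Hin]; [apply Hf; apply NL_app; auto|].
      apply NL_app in Hin as [Hin|Hin]; [|apply Hf; apply NL_app; auto].
      apply Hn in Hin. rewrite <- PR in Hin. apply Hf. unfold NL. rewrite !in_app_iff. auto.
  - intros p Hp. specialize (Hps p Hp).
    eapply dh_p; [apply (IH _ _ _ Hps Ra Ga Da) | psolve | psolve | psolve].
    + intros y Hy. apply Hw in Hy. rewrite <- PR, flat_map_app in Hy. rewrite flat_map_app, in_app_iff.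
      apply in_app_iff in Hy as [Hy|Hy]; [left|right; auto].
      apply in_flat_map in Hy as (r & Hr & Hy). apply in_flat_map. exists r. split; auto.
      eapply rinst_Rc_keep; eauto.
    + intros y Hy. apply Hn in Hy. rewrite <- PR, flat_map_app in Hy. rewrite flat_map_app, in_app_iff.
      apply in_app_iff in Hy as [Hy|Hy]; [left|right; auto].
      apply in_flat_map in Hy as (r & Hr & Hy). apply in_flat_map. exists r. split; auto.
      eapply rinst_Rc_keep; eauto.
  - rewrite <- PR; psolve.
  - rewrite <- PG; psolve.
  - rewrite <- PD; psolve.
Qed.

Lemma monall s n : forall R G0 D, dh s n R G0 D -> forall a b A G,
  Permutation G0 (LAll b A :: G) -> In (LAll a A) G -> In (RSub b a) R -> exists m, dh s m R G D.
Proof.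
  induction n as [|n IH]; intros R G0 D H a b A G HG Ha Hb;
  destruct (dh_inv _ _ _ _ _ H) as (m & Rc & Gc & Dc & ps & e & R1 & G1 & D1 & Hm & Hri & Hf & Hps & PR & PG & PD);
  [discriminate|]. injection Hm as Hm; subst n.
  assert (PG' : Permutation (Gc ++ G1) (LAll b A :: G)) by (rewrite PG; exact HG).
  destruct (perm_split _ _ _ _ PG') as [(G1' & P1 & P2) | (Gc' & P1 & P2)].
  - assert (Hex : exists k, forall p, In p ps -> dh s k (pR p ++ R1) (pG p ++ G1') (pD p ++ D1)).
    { apply (all_ex_mono s ps (fun p => (pR p ++ R1, pG p ++ G1', pD p ++ D1))).
      intros p Hp. simpl. apply (IH _ _ _ (Hps p Hp) a b A).
      - rewrite P1. psolve.
      - rewrite P2 in Ha. apply in_app_iff in Ha as [Ha|Ha]; apply in_app_iff; [left|right; auto].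
        eapply rinst_LAll_keep; eauto.
      - rewrite <- PR in Hb. apply in_app_iff in Hb as [Hb|Hb]; apply in_app_iff; [left|right; auto].
        eapply rinst_Rc_keep; eauto. }
    destruct Hex as [k Hk]. exists (S k).
    apply (dh_rule_p s k Rc Gc Dc ps e R1 G1' D1); [exact Hri| |exact Hk|exact PR|rewrite P2; reflexivity|exact PD].
    destruct e; simpl in *; auto; intro Hin; apply Hf; revert Hin;
      [apply WL_incl | apply NL_incl]; try apply incl_refl; apply incl_app; try (apply incl_appl, incl_refl);
      apply incl_appr; intros z Hz; rewrite P1; simpl in *; tauto.
  - destruct (rinst_len _ _ _ _ _ _ Hri) as (L1 & _ & _).
    destruct (perm_single _ _ _ L1 P1) as [-> ->]. simpl in P2.
    inversion Hri; subst. rename x into x0.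
    pose proof (Hps _ (or_introl eq_refl)) as HP. unfold pR, pG, pD in HP; simpl in HP.
    assert (Hb' : In (RSub b a) R1) by (rewrite <- PR in Hb; destruct Hb as [Hb|Hb]; [discriminate|exact Hb]).
    destruct (IH _ _ _ HP a b A (LW x0 A :: G1)) as [k Hk].
    { psolve. }
    { right. rewrite <- P2. exact Ha. }
    { right; exact Hb'. }
    assert (Hk2 : dh s k ([RIn x0 a] ++ RIn x0 b :: R1) ([] ++ LW x0 A :: G1) ([] ++ D1)).
    { apply weak; [exact Hk | |].
      - intros y Hy. unfold WL in Hy; simpl in Hy. destruct Hy as [<-|[]]. left; auto.
      - intros y Hy. unfold NL in Hy; simpl in Hy. destruct Hy as [<-|[]]. simpl. right.
        apply in_flat_map. exists (RSub b a). split; simpl; auto. }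
    apply in_split in Hb' as (l1 & l2 & E1).
    assert (HaG : In (LAll a A) G1) by (rewrite <- P2; exact Ha).
    apply in_split in HaG as (g1 & g2 & E2).
    exists (S (S k)).
    apply (dh_rule_p s (S k) [RIn x0 b; RSub b a] [] [] [([RIn x0 b; RSub b a; RIn x0 a], [], [])] NoEig
             (l1 ++ l2) G1 D1); [apply ri_Lsub | exact I | | rewrite <- PR, E1; psolve | rewrite P2; psolve | exact PD].
    intros q [<-|[]]. unfold pR, pG, pD; simpl.
    apply (dh_rule_p s k [RIn x0 a] [LAll a A] [] [([RIn x0 a], [LW x0 A; LAll a A], [])] NoEig
             (RIn x0 b :: RSub b a :: l1 ++ l2) (g1 ++ g2) D1); [apply ri_Lall | exact I | | psolve | rewrite E2; psolve | psolve].
    intros q [<-|[]]. unfold pR, pG, pD; simpl.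
    eapply dh_p; [exact Hk2 | rewrite E1; psolve | rewrite E2; psolve | reflexivity].
Qed.

Theorem mainTheorem15 :
  (forall a b A R G D,
     CL (RSub b a :: R) (LAll b A :: LAll a A :: G) D ->
     CL (RSub b a :: R) (LAll a A :: G) D)
  /\
  (forall x a A B R G D,
     CL (RN a x :: R) (LW x (Cnd A B) :: G) (LEx a A :: D) ->
     CL (RN a x :: R) (LEx a A :: LCnd x a A B :: LW x (Cnd A B) :: G) D ->
     CL (RN a x :: R) (LW x (Cnd A B) :: G) D)
  /\
  (forall x a A B R G D,
     CLstar (RN a x :: R) (LW x (Cnd A B) :: G) (LEx a A :: D) ->
     CLstar (RN a x :: R) (LCnd x a A B :: LW x (Cnd A B) :: G) D ->
     CLstar (RN a x :: R) (LW x (Cnd A B) :: G) D).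
Proof.
  split; [|split].
  - intros a b A R G D H. apply der_dh in H as [n H].
    destruct (monall _ _ _ _ _ H a b A (LAll a A :: G)) as [m Hm].
    + reflexivity.
    + left; reflexivity.
    + left; reflexivity.
    + eapply dh_der; exact Hm.
  - intros x a A B R G D H1 H2. apply der_dh in H2 as [n Q2].
    destruct (fresh_nat (WL (RN a x :: R) (LEx a A :: LCnd x a A B :: LW x (Cnd A B) :: G) D)) as [y Hy].
    pose proof (inv_Lex _ _ _ _ _ a A y Q2) as Q3.
    destruct (fresh_nat (NL (RIn y a :: RN a x :: R) (LW y A :: LCnd x a A B :: LW x (Cnd A B) :: G) D)) as [c Hc].
    assert (Q4 : dh false n (RN c x :: RSub c a :: RIn y a :: RN a x :: R)
                   (LEx c A :: LAll c (Imp A B) :: LW y A :: LW x (Cnd A B) :: G) D).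
    { apply inv_Lbar. eapply dh_p; [exact Q3 | reflexivity | psolve | reflexivity]. }
    destruct (fresh_nat (WL (RN c x :: RSub c a :: RIn y a :: RN a x :: R)
                   (LEx c A :: LAll c (Imp A B) :: LW y A :: LW x (Cnd A B) :: G) D)) as [w Hw].
    pose proof (inv_Lex _ _ _ _ _ c A w Q4) as Q5.
    assert (Q6 : dh false n ([RIn w c] ++ RN c x :: RSub c a :: RIn y a :: RN a x :: R)
                   ([LW w A] ++ LAll c (Imp A B) :: LW y A :: LW x (Cnd A B) :: G) ([] ++ D)) by exact Q5.
    apply (subW _ _ _ _ _ _ _ _ w y) in Q6;
      [| eapply fresh_subW; [exact Hw | apply incl_refl | intros z Hz; right; exact Hz | apply incl_refl]].
    cbn [map sr sl app] in Q6. rewrite upd_eq in Q6.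
    assert (Q7 : dh false n (RIn y c :: RN c x :: RSub c a :: RIn y a :: RN a x :: R)
                   (LW y A :: LAll c (Imp A B) :: LW x (Cnd A B) :: G) D).
    { apply contrL. eapply dh_p; [exact Q6 | reflexivity | psolve | reflexivity]. }
    apply dh_der in Q7.
    unfold CL in *.
    apply d_Lcnd; [reflexivity | exact H1 | ].
    apply (d_Lbar false x a c A B (RN a x :: R) (LW x (Cnd A B) :: G) D).
    { apply nfresh_iff. eapply fresh_subN; [exact Hc | intros z Hz; right; exact Hz | | apply incl_refl].
      intros z Hz; simpl in *; tauto. }
    apply (d_Lex false y c A (RN c x :: RSub c a :: RN a x :: R) (LAll c (Imp A B) :: LW x (Cnd A B) :: G) D).
    { apply wfresh_iff. intro Hin; apply Hy; unfold WL in *; simpl in *; rewrite !in_app_iff in *; simpl in *; tauto. }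
    apply d_perm with (R := RIn y c :: RSub c a :: RN c x :: RN a x :: R)
      (G := LW y A :: LAll c (Imp A B) :: LW x (Cnd A B) :: G) (D := D); [| psolve | reflexivity | reflexivity].
    apply d_Lsub.
    eapply d_perm; [exact Q7 | psolve | reflexivity | reflexivity].
  - intros x a A B R G D H1 H2. apply der_dh in H2 as [n Q2].
    assert (Q3 : dh true n ([] ++ RN a x :: R) ([LEx a A] ++ LCnd x a A B :: LW x (Cnd A B) :: G) ([] ++ D)).
    { apply weak; [exact Q2 | |].
      - intros y Hy. unfold WL in Hy; simpl in Hy. contradiction.
      - intros y Hy. unfold NL in Hy; simpl in Hy. destruct Hy as [<-|[]]. left; reflexivity. }
    apply dh_der in Q3. simpl in Q3.
    unfold CLstar in *.
    apply d_Lcnd_star; [reflexivity | exact H1 | exact Q3].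
Qed.
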